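(* Let $\mathcal{A}=(\omega,f)$ and $\mathcal{B}=(\omega,g)$ be computable (2,1):1 structures that are isomorphic, and suppose that the branching functions $\beta_{\mathcal{A}},\beta_{\mathcal{B}}$ and the branch isomorphism functions $iso_{\mathcal{A}}, iso_{\mathcal{B}}$ are all computable. (i) If $a_0\in\omega$ is a non-cyclic element of $\mathcal{A}$ and $b_0\in\omega$ is a non-cyclic element of $\mathcal{B}$ with $Tree_{\mathcal{A}}(a_0)\cong Tree_{\mathcal{B}}(b_0)$, then there is a computable isomorphism from $Tree_{\mathcal{A}}(a_0)$ onto $Tree_{\mathcal{B}}(b_0)$ (i.e. a partial computable function defined on all of $tree_{\mathcal{A}}(a_0)$ whose restriction there is such an isomorphism). (ii) If $c$ is a cyclic element of $\mathcal{A}$ and $d$ is a cyclic element of $\mathcal{B}$ with $exTree_{\mathcal{A}}(c)\cong exTree_{\mathcal{B}}(d)$, then there is a computable isomorphism from $exTree_{\mathcal{A}}(c)$ onto $exTree_{\mathcal{B}}(d)$.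
   Context: A (2,1):1 structure is a pair $\mathcal{A}=(A,f)$ with $A$ a countable set and $f:A\to A$ such that $|f^{-1}(a)|\in\{1,2\}$ for every $a\in A$. It is computable if $A$ is a computable set (here $A=\omega$) and $f$ is a computable function. An element $x$ is cyclic if $f^n(x)=x$ for some $n>0$. For $x\in A$, $tree_{\mathcal{A}}(x)=\{a\in A:\exists n\ge 0\ (f^n(a)=x)\}$, and $Tree_{\mathcal{A}}(x)$ is the directed graph with vertex set $tree_{\mathcal{A}}(x)$ and edge set $\{(a,f(a)): a\in tree_{\mathcal{A}}(x),\ f(a)\in tree_{\mathcal{A}}(x)\}$. If $c$ is a cyclic element lying on a directed cycle with exactly $K$ elements, $extree_{\mathcal{A}}(c)=\{a\in A: \exists n\,[f^n(a)=c \wedge \forall m<n\ (f^{m+K}(a)\neq f^m(a))]\}$ (i.e. $c$ together with the non-cyclic elements whose forward orbit first reaches the cycle at $c$), and $exTree_{\mathcal{A}}(c)$ is the associated directed graph with vertex set $extree_{\mathcal{A}}(c)$ and edges $(a,f(a))$ for $a\in extree_{\mathcal{A}}(c)$, $a\ne c$ (a rooted tree with root $c$). The branching function $\beta_{\mathcal{A}}:A\to\{1,2\}$ is $\beta_{\mathcal{A}}(x)=|f^{-1}(x)|$. The split hair set is $\Lambda_{\mathcal{A}}=\{x:\beta_{\mathcal{A}}(x)=2\}$. The branch isomorphism function $iso_{\mathcal{A}}:\Lambda_{\mathcal{A}}\to\{0,1\}$ is defined, for $x\in\Lambda_{\mathcal{A}}$ with distinct pre-images $x_1,x_2$, by $iso_{\mathcal{A}}(x)=1$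 if $Tree_{\mathcal{A}}(x_1)\cong Tree_{\mathcal{A}}(x_2)$ and $iso_{\mathcal{A}}(x)=0$ otherwise; ''computable'' for $iso_{\mathcal{A}}$ means it is the restriction to $\Lambda_{\mathcal{A}}$ of a partial computable function. *)

(* Defs.v *)
From Stdlib Require Import List Arith Classical ClassicalEpsilon.
Import ListNotations.

Inductive prf : Type :=
| PZero : prf
| PSucc : prf
| PProj : nat -> prf
| PComp : prf -> list prf -> prf
| PPrec : prf -> prf -> prf
| PMu   : prf -> prf.

Inductive eval : prf -> list nat -> nat -> Prop :=
| ev_zero : forall xs, eval PZero xs 0
| ev_succ : forall x xs, eval PSucc (x :: xs) (S x)
| ev_proj : forall i xs, i < length xs -> eval (PProj i) xs (nth i xs 0)
| ev_comp : forall f gs xs ys y,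
    Forall2 (fun g z => eval g xs z) gs ys ->
    eval f ys y -> eval (PComp f gs) xs y
| ev_prec0 : forall f g xs y,
    eval f xs y -> eval (PPrec f g) (0 :: xs) y
| ev_precS : forall f g n xs z y,
    eval (PPrec f g) (n :: xs) z -> eval g (n :: z :: xs) y ->
    eval (PPrec f g) (S n :: xs) y
| ev_mu : forall f xs n,
    eval f (n :: xs) 0 ->
    (forall m, m < n -> exists k, eval f (m :: xs) (S k)) ->
    eval (PMu f) xs n.

Definition computable_fun (h : nat -> nat) : Prop :=
  exists e : prf, forall x, eval e [x] (h x).

Definition computable_on (D : nat -> Prop) (h : nat -> nat) : Prop :=
  exists e : prf, forall x, D x -> eval e [x] (h x).

Definition is_21_structure (f : nat -> nat) : Prop :=
  forall a, (exists x, f x = a) /\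
    (forall x y z, f x = a -> f y = a -> f z = a -> x = y \/ x = z \/ y = z).

Definition computable_21 (f : nat -> nat) : Prop :=
  is_21_structure f /\ computable_fun f.

Definition cyclic (f : nat -> nat) (x : nat) : Prop :=
  exists n, 0 < n /\ Nat.iter n f x = x.

Definition tree (f : nat -> nat) (x : nat) (a : nat) : Prop :=
  exists n, Nat.iter n f a = x.

Definition tree_edge (f : nat -> nat) (x : nat) (a b : nat) : Prop :=
  tree f x a /\ tree f x b /\ b = f a.

Definition cycle_length (f : nat -> nat) (c K : nat) : Prop :=
  0 < K /\ Nat.iter K f c = c /\ (forall m, 0 < m < K -> Nat.iter m f c <> c).

Definition extree (f : nat -> nat) (c : nat) (a : nat) : Prop :=
  exists K, cycle_length f c K /\
    exists n, Nat.iter n f a = c /\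
      (forall m, m < n -> Nat.iter (m + K) f a <> Nat.iter m f a).

Definition extree_edge (f : nat -> nat) (c : nat) (a b : nat) : Prop :=
  extree f c a /\ a <> c /\ b = f a.

Definition digraph_iso (V : nat -> Prop) (E : nat -> nat -> Prop)
    (W : nat -> Prop) (F : nat -> nat -> Prop) (h : nat -> nat) : Prop :=
  (forall a, V a -> W (h a)) /\
  (forall a b, V a -> V b -> h a = h b -> a = b) /\
  (forall b, W b -> exists a, V a /\ h a = b) /\
  (forall a b, V a -> V b -> (E a b <-> F (h a) (h b))).

Definition digraph_isomorphic V E W F : Prop :=
  exists h, digraph_iso V E W F h.

Definition Tree_iso (f g : nat -> nat) (x y : nat) : Prop :=
  digraph_isomorphic (tree f x) (tree_edge f x) (tree g y) (tree_edge g y).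

Definition exTree_iso (f g : nat -> nat) (c d : nat) : Prop :=
  digraph_isomorphic (extree f c) (extree_edge f c) (extree g d) (extree_edge g d).

Definition struct_isomorphic (f g : nat -> nat) : Prop :=
  exists h h' : nat -> nat,
    (forall a, h' (h a) = a) /\ (forall b, h (h' b) = b) /\
    (forall a, g (h a) = h (f a)).

Definition two_preimages (f : nat -> nat) (x : nat) : Prop :=
  exists y z, y <> z /\ f y = x /\ f z = x.

Definition beta (f : nat -> nat) (x : nat) : nat :=
  if excluded_middle_informative (two_preimages f x) then 2 else 1.

Definition split_hair (f : nat -> nat) (x : nat) : Prop := beta f x = 2.

(** branch isomorphism function (meaningful on the split hair set) *)
Definition iso_fun (f : nat -> nat) (x : nat) : nat :=
  if excluded_middle_informative
       (exists x1 x2, x1 <> x2 /\ f x1 = x /\ f x2 = x /\ Tree_iso f f x1 x2)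
  then 1 else 0.

(* Main.v *)
Require Import Defs.
From Stdlib Require Import List Arith Bool Lia Classical ClassicalEpsilon FunctionalExtensionality.
Import ListNotations.


Lemma ex_least (P : nat -> bool) :
  (exists n, P n = true) -> exists n, P n = true /\ forall m, m < n -> P m = false.
Proof.
  intros [n Hn].
  assert (H : forall N, (exists n, n <= N /\ P n = true) ->
     exists n, P n = true /\ forall m, m < n -> P m = false).
  { induction N as [|N IH]; intros [k [Hk Pk]].
    - exists k. split; auto. intros; lia.
    - destruct (classic (exists n, n <= N /\ P n = true)) as [Hc|Hc].
      + apply IH; auto.
      + exists k. split; auto. intros m Hm.
        destruct (P m) eqn:E; auto. exfalso; apply Hc. exists m; split; auto; lia. }
  apply (H n). exists n; auto.
Qed.

Definition lst (P : nat -> bool) : nat :=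
  epsilon (inhabits 0) (fun n => P n = true /\ forall m, m < n -> P m = false).

Lemma lst_spec P : (exists n, P n = true) ->
  P (lst P) = true /\ forall m, m < lst P -> P m = false.
Proof.
  intros H. unfold lst. apply epsilon_spec. apply ex_least; auto.
Qed.

Lemma lst_ext P Q : (forall n, P n = Q n) -> lst P = lst Q.
Proof. intros H. f_equal. apply functional_extensionality; auto. Qed.

Lemma lst_unique P n : P n = true -> (forall m, m < n -> P m = false) -> lst P = n.
Proof.
  intros H1 H2. destruct (lst_spec P) as [A B]; [eauto|].
  destruct (lt_eq_lt_dec (lst P) n) as [[h|h]|h]; auto.
  - rewrite H2 in A; auto; discriminate.
  - rewrite B in H1; auto; discriminate.
Qed.

Definition cmpD (D : list nat -> Prop) (F : list nat -> nat) : Prop :=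
  exists e, forall ys, D ys -> eval e ys (F ys).

Inductive exp : Type :=
| V : nat -> exp
| Z : exp
| Su : exp -> exp
| Ap : forall (F : list nat -> nat) (D : list nat -> Prop), cmpD D F -> exps -> exp
| Rec : exp -> exp -> exp -> exp
| Mu : exp -> exp
| IfNZ : exp -> exp -> exp -> exp
with exps : Type :=
| enil : exps
| econs : exp -> exps -> exps.

Scheme exp_ind2 := Induction for exp Sort Prop
with exps_ind2 := Induction for exps Sort Prop.

Fixpoint recv (st : nat -> nat -> nat) (b : nat) (n : nat) : nat :=
  match n with 0 => b | S i => st i (recv st b i) end.

Fixpoint den (e : exp) (env : list nat) : nat :=
  match e with
  | V i => nth i env 0
  | Z => 0
  | Su a => S (den a env)
  | Ap F D _ args => F (dens args env)
  | Rec n b s => recv (fun i r => den s (i :: r :: env)) (den b env) (den n env)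
  | Mu b => lst (fun n => Nat.eqb (den b (n :: env)) 0)
  | IfNZ c a b => if Nat.eqb (den c env) 0 then den b env else den a env
  end
with dens (es : exps) (env : list nat) : list nat :=
  match es with
  | enil => []
  | econs a r => den a env :: dens r env
  end.

Fixpoint dfd (e : exp) (env : list nat) : Prop :=
  match e with
  | V _ => True
  | Z => True
  | Su a => dfd a env
  | Ap F D _ args => dfds args env /\ D (dens args env)
  | Rec n b s => dfd n env /\ dfd b env /\
      forall i, i < den n env ->
        dfd s (i :: recv (fun i r => den s (i :: r :: env)) (den b env) i :: env)
  | Mu b => (exists n, den b (n :: env) = 0) /\ forall m, dfd b (m :: env)
  | IfNZ c a b => dfd c env /\ dfd b env /\ (den c env <> 0 -> dfd a env)
  end
with dfds (es : exps) (env : list nat) : Prop :=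
  match es with
  | enil => True
  | econs a r => dfd a env /\ dfds r env
  end.

Lemma projs_ok : forall (pre env : list nat) m j,
  j + m = length env ->
  Forall2 (fun p z => eval p (pre ++ env) z)
    (map (fun i => PProj (i + length pre)) (seq j m)) (skipn j env).
Proof.
  intros pre env m. induction m as [|m IH]; intros j Hj; simpl.
  - replace (skipn j env) with (@nil nat). constructor.
    symmetry. apply skipn_all2. lia.
  - assert (Hs : skipn j env = nth j env 0 :: skipn (S j) env).
    { clear IH. revert env Hj. induction j as [|j IHj]; intros env Hj.
      - destruct env; simpl in *; [lia|auto].
      - destruct env; simpl in *; [lia|]. apply IHj. lia. }
    rewrite Hs. constructor.
    + replace (nth j env 0) with (nth (j + length pre) (pre ++ env) 0).
      * constructor. rewrite length_app. lia.
      * rewrite app_nth2 by lia. f_equal. lia.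
    + apply IH. lia.
Qed.

Lemma projs_ok0 : forall (pre env : list nat),
  Forall2 (fun p z => eval p (pre ++ env) z)
    (map (fun i => PProj (i + length pre)) (seq 0 (length env))) env.
Proof.
  intros. pose proof (projs_ok pre env (length env) 0 eq_refl). simpl in H. exact H.
Qed.

Theorem core : forall e k, exists p, forall env, length env = k -> dfd e env -> eval p env (den e env).
Proof.
  intro e.
  apply (exp_ind2
    (fun e => forall k, exists p, forall env, length env = k -> dfd e env -> eval p env (den e env))
    (fun es => forall k, exists ps, forall env, length env = k -> dfds es env ->
       Forall2 (fun p z => eval p env z) ps (dens es env))).
  - intros i k. destruct (lt_dec i k).
    + exists (PProj i). intros env Hl _. simpl. constructor. lia.
    + exists PZero. intros env Hl _. simpl. rewrite nth_overflow by lia. constructor.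
  - intros k. exists PZero. intros; constructor.
  - intros a IH k. destruct (IH k) as [p Hp]. exists (PComp PSucc [p]).
    intros env Hl Hd. simpl in *. econstructor.
    + constructor; [apply Hp; auto| constructor].
    + constructor.
  - intros F D HF args IH k. destruct HF as [pF HpF]. destruct (IH k) as [ps Hps].
    exists (PComp pF ps). intros env Hl [Hd HD]. simpl. econstructor; eauto.
  - intros n IHn b IHb s IHs k.
    destruct (IHn k) as [pn Hn]. destruct (IHb k) as [pb Hb]. destruct (IHs (S (S k))) as [ps Hs].
    exists (PComp (PPrec pb ps) (pn :: map (fun i => PProj (i + length (@nil nat))) (seq 0 k))).
    intros env Hl [Dn [Db Ds]]. simpl den. econstructor.
    + constructor; [apply Hn; auto|]. subst k. apply (projs_ok0 [] env).
    + assert (forall N, N <= den n env ->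
        eval (PPrec pb ps) (N :: env) (recv (fun i r => den s (i :: r :: env)) (den b env) N)).
      { induction N as [|N IHN]; intros HN.
        - constructor. apply Hb; auto.
        - simpl. econstructor. apply IHN; lia. apply Hs; [simpl; lia | apply Ds; lia]. }
      apply H; auto.
  - intros b IHb k. destruct (IHb (S k)) as [pb Hb]. exists (PMu pb).
    intros env Hl [[n0 Hn0] Db]. simpl.
    destruct (lst_spec (fun n => Nat.eqb (den b (n :: env)) 0)) as [A B].
    { exists n0. rewrite Hn0. auto. }
    constructor.
    + apply Nat.eqb_eq in A.
      set (L := lst (fun n => Nat.eqb (den b (n :: env)) 0)) in *.
      pose proof (Hb (L :: env)) as E. simpl in E. rewrite A in E. apply E; auto.
    + intros m Hm. specialize (B m Hm). apply Nat.eqb_neq in B.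
      destruct (den b (m :: env)) as [|q] eqn:E; [contradiction|].
      exists q. rewrite <- E. apply Hb; simpl; auto.
  - intros c IHc a IHa b IHb k.
    destruct (IHc k) as [pc Hc]. destruct (IHa k) as [pa Ha]. destruct (IHb k) as [pb Hb].
    set (pa' := PComp pa (map (fun i => PProj (i + length [0;0])) (seq 0 k))).
    exists (PComp (PPrec pb pa') (pc :: map (fun i => PProj (i + length (@nil nat))) (seq 0 k))).
    intros env Hl [Dc [Db Da]]. simpl den. econstructor.
    + constructor; [apply Hc; auto|]. subst k. apply (projs_ok0 [] env).
    + destruct (den c env) as [|m] eqn:E; simpl.
      * constructor. apply Hb; auto.
      * assert (Ha' : forall x y, eval pa' (x :: y :: env) (den a env)).
        { intros x y. unfold pa'. econstructor.
          - subst k. apply (projs_ok0 [x;y] env).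
          - apply Ha; [auto | apply Da; lia]. }
        clear E Da. induction m as [|m IHm].
        -- eapply ev_precS; [apply ev_prec0; apply Hb; auto | apply Ha'].
        -- econstructor. apply IHm. apply Ha'.
  - intros k. exists []. intros. constructor.
  - intros a IHa r IHr k. destruct (IHa k) as [p Hp]. destruct (IHr k) as [ps Hps].
    exists (p :: ps). intros env Hl [Da Dr]. simpl. constructor; auto.
Qed.

Definition fn (e : exp) : list nat -> nat := den e.
Definition dfn (e : exp) : list nat -> Prop := dfd e.
Arguments fn : simpl never.
Arguments dfn : simpl never.

Lemma mk_cmp e k : cmpD (fun ys => length ys = k /\ dfn e ys) (fn e).
Proof.
  destruct (core e k) as [p Hp]. exists p. intros ys [Hl Hd]. apply Hp; auto.
Qed.

Definition mkAp (e : exp) (k : nat) (args : exps) : exp :=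
  Ap (fn e) (fun ys => length ys = k /\ dfn e ys) (mk_cmp e k) args.

Lemma den_mkAp e k args env : den (mkAp e k args) env = fn e (dens args env).
Proof. reflexivity. Qed.

Lemma dfd_mkAp e k args env :
  dfd (mkAp e k args) env = (dfds args env /\ (length (dens args env) = k /\ dfn e (dens args env))).
Proof. reflexivity. Qed.


Fixpoint es (l : list exp) : exps :=
  match l with [] => enil | a :: r => econs a (es r) end.

Fixpoint cst (n : nat) : exp := match n with 0 => Z | S m => Su (cst m) end.
Lemma den_cst n env : den (cst n) env = n.
Proof. induction n; simpl; auto. Qed.
Lemma dfd_cst n env : dfd (cst n) env.
Proof. induction n; simpl; auto. Qed.

Definition predE := Rec (V 0) Z (V 0).
Lemma fn_predE x : fn predE [x] = pred x.
Proof. unfold fn; simpl. destruct x; reflexivity. Qed.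
Lemma tot_predE env : dfn predE env.
Proof. unfold dfn; simpl; auto. Qed.
Definition PRED a := mkAp predE 1 (es [a]).
Lemma den_PRED a env : den (PRED a) env = pred (den a env).
Proof. apply fn_predE. Qed.
Lemma dfd_PRED a env : dfd a env -> dfd (PRED a) env.
Proof. intros; unfold PRED; rewrite dfd_mkAp; simpl; auto using tot_predE. Qed.

Definition addE := Rec (V 1) (V 0) (Su (V 1)).
Lemma fn_addE x y : fn addE [x; y] = x + y.
Proof. unfold fn; simpl. induction y; simpl; [lia|]. rewrite IHy; lia. Qed.
Lemma tot_addE env : dfn addE env.
Proof. unfold dfn; simpl; auto. Qed.
Definition ADD a b := mkAp addE 2 (es [a; b]).
Lemma den_ADD a b env : den (ADD a b) env = den a env + den b env.
Proof. apply fn_addE. Qed.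
Lemma dfd_ADD a b env : dfd a env -> dfd b env -> dfd (ADD a b) env.
Proof. intros; unfold ADD; rewrite dfd_mkAp; simpl; auto using tot_addE. Qed.

Definition subE := Rec (V 1) (V 0) (PRED (V 1)).
Lemma fn_subE x y : fn subE [x; y] = x - y.
Proof. unfold fn; simpl. induction y; simpl; [lia|]. rewrite fn_predE, IHy. lia. Qed.
Lemma tot_subE env : dfn subE env.
Proof. unfold dfn; cbn [dfd dfds]; repeat split; auto; intros; try (apply dfd_PRED; simpl; auto). Qed.
Definition SUB a b := mkAp subE 2 (es [a; b]).
Lemma den_SUB a b env : den (SUB a b) env = den a env - den b env.
Proof. apply fn_subE. Qed.
Lemma dfd_SUB a b env : dfd a env -> dfd b env -> dfd (SUB a b) env.
Proof. intros; unfold SUB; rewrite dfd_mkAp; simpl; auto using tot_subE. Qed.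

Definition mulE := Rec (V 1) Z (ADD (V 1) (V 2)).
Lemma fn_mulE x y : fn mulE [x; y] = x * y.
Proof. unfold fn; simpl. induction y; simpl; [lia|]. rewrite fn_addE, IHy. lia. Qed.
Lemma tot_mulE env : dfn mulE env.
Proof. unfold dfn; cbn [dfd dfds]; repeat split; auto; intros; try (apply dfd_ADD; simpl; auto). Qed.
Definition MUL a b := mkAp mulE 2 (es [a; b]).
Lemma den_MUL a b env : den (MUL a b) env = den a env * den b env.
Proof. apply fn_mulE. Qed.
Lemma dfd_MUL a b env : dfd a env -> dfd b env -> dfd (MUL a b) env.
Proof. intros; unfold MUL; rewrite dfd_mkAp; simpl; auto using tot_mulE. Qed.

Definition SG a := SUB (cst 1) (SUB (cst 1) a).
Lemma den_SG a env : den (SG a) env = if den a env =? 0 then 0 else 1.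
Proof. unfold SG. rewrite !den_SUB, !den_cst. destruct (den a env); simpl; lia. Qed.
Lemma dfd_SG a env : dfd a env -> dfd (SG a) env.
Proof. intros; unfold SG; auto using dfd_SUB, dfd_cst. Qed.

Definition NEQ a b := ADD (SUB a b) (SUB b a).
Lemma den_NEQ a b env : den (NEQ a b) env = if den a env =? den b env then 0 else S (pred (den (NEQ a b) env)).
Proof. unfold NEQ. rewrite den_ADD, !den_SUB. destruct (Nat.eqb_spec (den a env) (den b env)); lia. Qed.
Lemma den_NEQ0 a b env : (den (NEQ a b) env =? 0) = (den a env =? den b env).
Proof. unfold NEQ. rewrite den_ADD, !den_SUB. destruct (Nat.eqb_spec (den a env) (den b env)).
  - apply Nat.eqb_eq. lia.
  - apply Nat.eqb_neq. lia. Qed.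
Lemma dfd_NEQ a b env : dfd a env -> dfd b env -> dfd (NEQ a b) env.
Proof. intros; unfold NEQ; auto using dfd_SUB, dfd_ADD. Qed.

Definition ITE c a b := ADD (MUL a (SG c)) (MUL b (SUB (cst 1) (SG c))).
Lemma den_ITE c a b env : den (ITE c a b) env = if den c env =? 0 then den b env else den a env.
Proof. unfold ITE. rewrite den_ADD, !den_MUL, den_SUB, den_SG, den_cst.
  destruct (den c env =? 0); simpl; lia. Qed.
Lemma dfd_ITE c a b env : dfd c env -> dfd a env -> dfd b env -> dfd (ITE c a b) env.
Proof. intros; unfold ITE; auto 10 using dfd_SUB, dfd_ADD, dfd_MUL, dfd_SG, dfd_cst. Qed.

Definition EQ a b := ITE (NEQ a b) (cst 0) (cst 1).
Lemma den_EQ a b env : den (EQ a b) env = if den a env =? den b env then 1 else 0.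
Proof. unfold EQ. rewrite den_ITE, den_NEQ0, !den_cst. destruct (den a env =? den b env); auto. Qed.
Lemma dfd_EQ a b env : dfd a env -> dfd b env -> dfd (EQ a b) env.
Proof. intros; unfold EQ; auto using dfd_ITE, dfd_NEQ, dfd_cst. Qed.

Definition LT a b := SG (SUB b a).
Lemma den_LT a b env : den (LT a b) env = if den a env <? den b env then 1 else 0.
Proof. unfold LT. rewrite den_SG, den_SUB. destruct (Nat.ltb_spec (den a env) (den b env)).
  - destruct (Nat.eqb_spec (den b env - den a env) 0); [lia|auto].
  - destruct (Nat.eqb_spec (den b env - den a env) 0); [auto|lia]. Qed.
Lemma dfd_LT a b env : dfd a env -> dfd b env -> dfd (LT a b) env.
Proof. intros; unfold LT; auto using dfd_SG, dfd_SUB. Qed.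

Definition pow2E := Rec (V 0) (cst 1) (MUL (V 1) (cst 2)).
Lemma fn_pow2E x : fn pow2E [x] = 2 ^ x.
Proof. unfold fn; simpl. induction x; simpl; [reflexivity|]. rewrite fn_mulE, IHx. lia. Qed.
Lemma tot_pow2E env : dfn pow2E env.
Proof. unfold dfn; cbn [dfd dfds]; repeat split; auto using dfd_cst; intros; try (apply dfd_MUL; simpl; auto using dfd_cst). Qed.
Definition POW2 a := mkAp pow2E 1 (es [a]).
Lemma den_POW2 a env : den (POW2 a) env = 2 ^ den a env.
Proof. apply fn_pow2E. Qed.
Lemma dfd_POW2 a env : dfd a env -> dfd (POW2 a) env.
Proof. intros; unfold POW2; rewrite dfd_mkAp; simpl; auto using tot_pow2E. Qed.

Definition divbody := MUL (SG (V 2)) (SUB (Su (V 1)) (MUL (Su (V 0)) (V 2))).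
Lemma den_divbody n x y : den divbody [n; x; y] = (if y =? 0 then 0 else 1) * (S x - S n * y).
Proof. unfold divbody. rewrite den_MUL, den_SG, den_SUB, den_MUL. simpl. reflexivity. Qed.
Lemma dfd_divbody env : dfd divbody env.
Proof. unfold divbody. apply dfd_MUL; [apply dfd_SG; exact I| apply dfd_SUB; [exact I| apply dfd_MUL; exact I]]. Qed.
Definition divE := Mu divbody.
Lemma divbody_env n x y l : den divbody (n :: x :: y :: l) = den divbody [n; x; y].
Proof. reflexivity. Qed.
Lemma fn_divE x y : fn divE [x; y] = x / y.
Proof.
  unfold fn, divE. cbn [den]. apply lst_unique.
  - rewrite den_divbody. destruct (Nat.eqb_spec y 0); [simpl; auto|].
    apply Nat.eqb_eq. assert (x < y * S (x / y)).
    { pose proof (Nat.div_mod x y n). pose proof (Nat.mod_upper_bound x y n). nia. }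
    rewrite Nat.mul_1_l. apply Nat.sub_0_le. nia.
  - intros m Hm. rewrite den_divbody. destruct (Nat.eqb_spec y 0).
    + subst. simpl in Hm. lia.
    + apply Nat.eqb_neq. rewrite Nat.mul_1_l. intro Hc. apply Nat.sub_0_le in Hc.
      pose proof (Nat.div_mod x y n). pose proof (Nat.mod_upper_bound x y n).
      assert (S m * y <= x / y * y) by nia. nia.
Qed.
Lemma tot_divE env : dfn divE env.
Proof.
  unfold dfn, divE; cbn [dfd]. split; [|intros; apply dfd_divbody].
  exists (nth 0 env 0). unfold divbody. rewrite den_MUL, den_SG, den_SUB, den_MUL. cbn [den nth].
  destruct (nth 1 env 0); simpl; [lia|]. rewrite Nat.add_0_r. apply Nat.sub_0_le. nia.
Qed.
Definition DIV a b := mkAp divE 2 (es [a; b]).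
Lemma den_DIV a b env : den (DIV a b) env = den a env / den b env.
Proof. apply fn_divE. Qed.
Lemma dfd_DIV a b env : dfd a env -> dfd b env -> dfd (DIV a b) env.
Proof. intros; unfold DIV; rewrite dfd_mkAp; simpl; auto using tot_divE. Qed.

Definition MOD a b := SUB a (MUL b (DIV a b)).
Lemma den_MOD a b env : den (MOD a b) env = den a env mod den b env.
Proof. unfold MOD. rewrite den_SUB, den_MUL, den_DIV.
  destruct (Nat.eqb_spec (den b env) 0) as [E|E].
  - rewrite E. simpl. lia.
  - pose proof (Nat.div_mod (den a env) (den b env) E). lia. Qed.
Lemma dfd_MOD a b env : dfd a env -> dfd b env -> dfd (MOD a b) env.
Proof. intros; unfold MOD; auto using dfd_SUB, dfd_MUL, dfd_DIV. Qed.

Definition bitn (s p : nat) := (s / 2 ^ p) mod 2.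
Definition BIT s p := MOD (DIV s (POW2 p)) (cst 2).
Lemma den_BIT s p env : den (BIT s p) env = bitn (den s env) (den p env).
Proof. unfold BIT. rewrite den_MOD, den_DIV, den_POW2, den_cst. reflexivity. Qed.
Lemma dfd_BIT s p env : dfd s env -> dfd p env -> dfd (BIT s p) env.
Proof. intros; unfold BIT; auto using dfd_MOD, dfd_DIV, dfd_POW2, dfd_cst. Qed.

(* bounded bit-sum: body in env (p :: acc :: env) *)
Fixpoint bsum (F : nat -> nat) (N : nat) : nat :=
  match N with 0 => 0 | S p => bsum F p + F p * 2 ^ p end.
Definition BSUM N body := Rec N Z (ADD (V 1) (MUL body (POW2 (V 0)))).
Lemma den_BSUM N body env F :
  (forall p r, den body (p :: r :: env) = F p) -> den (BSUM N body) env = bsum F (den N env).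
Proof.
  intros H. unfold BSUM. cbn [den]. induction (den N env) as [|n IH]; cbn [recv bsum]; auto.
  rewrite den_ADD, den_MUL, den_POW2. cbn [den nth]. rewrite IH, H. reflexivity.
Qed.
Lemma dfd_BSUM N body env :
  dfd N env -> (forall p r, dfd body (p :: r :: env)) -> dfd (BSUM N body) env.
Proof.
  intros H1 H2. unfold BSUM. cbn [dfd]. repeat split; auto.
Qed.

Lemma bsum_lt F N : (forall p, F p <= 1) -> bsum F N < 2 ^ N.
Proof.
  intros H. induction N; simpl; [lia|]. specialize (H N). nia.
Qed.

Lemma bit_bsum F N p : (forall q, F q <= 1) -> p < N -> bitn (bsum F N) p = F p.
Proof.
  intros HF. induction N as [|N IH]; intros Hp; [lia|].
  simpl. unfold bitn in *.
  destruct (Nat.eq_dec p N) as [->|Hne].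
  - pose proof (bsum_lt F N HF).
    rewrite Nat.div_add by (apply Nat.pow_nonzero; lia).
    rewrite Nat.div_small by lia. simpl. specialize (HF N).
    destruct (F N) as [|[|k]]; simpl; auto; lia.
  - assert (p < N) by lia.
    replace (F N * 2 ^ N) with ((F N * 2 ^ (N - p - 1) * 2) * 2 ^ p).
    2:{ rewrite <- !Nat.mul_assoc. f_equal. rewrite <- Nat.pow_succ_r'.
        rewrite <- Nat.pow_add_r. f_equal. lia. }
    rewrite Nat.div_add by (apply Nat.pow_nonzero; lia).
    rewrite Nat.add_mod by lia. rewrite Nat.mod_mul by lia. rewrite Nat.add_0_r.
    rewrite Nat.mod_mod by lia. apply IH; auto.
Qed.

Lemma den_V i env : den (V i) env = nth i env 0.
Proof. reflexivity. Qed.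
Lemma den_IfNZ c a b env : den (IfNZ c a b) env = if den c env =? 0 then den b env else den a env.
Proof. reflexivity. Qed.
Lemma den_Mu b env : den (Mu b) env = lst (fun n => den b (n :: env) =? 0).
Proof. reflexivity. Qed.
Lemma den_Rec n b s env : den (Rec n b s) env = recv (fun i r => den s (i :: r :: env)) (den b env) (den n env).
Proof. reflexivity. Qed.


Definition c1 (f : nat -> nat) (x : nat) : nat := lst (fun z => f z =? x).
Definition c2 (f : nat -> nat) (x : nat) : nat :=
  lst (fun z => (beta f x =? 1) || ((f z =? x) && negb (z =? c1 f x))).

Lemma beta_cases f x : beta f x = 1 \/ beta f x = 2.
Proof. unfold beta. destruct excluded_middle_informative; auto. Qed.

Lemma beta2_iff f x : beta f x = 2 <-> two_preimages f x.
Proof. unfold beta. destruct excluded_middle_informative; split; auto; intros; try discriminate; tauto. Qed.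

Lemma beta1_iff f x : beta f x = 1 <-> ~ two_preimages f x.
Proof. unfold beta. destruct excluded_middle_informative; split; auto; intros; try discriminate; tauto. Qed.

Section S21.
Variable f : nat -> nat.
Hypothesis Hf : is_21_structure f.

Lemma c1_pre x : f (c1 f x) = x.
Proof.
  destruct (Hf x) as [[z Hz] _]. unfold c1.
  destruct (lst_spec (fun z => f z =? x)) as [A _].
  - exists z. apply Nat.eqb_eq; auto.
  - apply Nat.eqb_eq; auto.
Qed.

Lemma beta1_uniq x z : beta f x = 1 -> f z = x -> z = c1 f x.
Proof.
  intros H1 H2. apply beta1_iff in H1. destruct (Nat.eq_dec z (c1 f x)); auto.
  exfalso; apply H1. exists z, (c1 f x). split; auto. split; auto. apply c1_pre.
Qed.

Lemma beta2_c2 x : beta f x = 2 -> f (c2 f x) = x /\ c2 f x <> c1 f x.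
Proof.
  intros H. pose proof H as H'. apply beta2_iff in H' as [y [z [Hyz [Hy Hz]]]].
  assert (Hb : (beta f x =? 1) = false) by (rewrite H; reflexivity).
  destruct (lst_spec (fun w => (beta f x =? 1) || ((f w =? x) && negb (w =? c1 f x)))) as [A _].
  - destruct (Nat.eq_dec y (c1 f x)).
    + exists z. rewrite Hb. simpl. apply andb_true_iff. split; [apply Nat.eqb_eq; auto|].
      apply negb_true_iff. apply Nat.eqb_neq. congruence.
    + exists y. rewrite Hb. simpl. apply andb_true_iff. split; [apply Nat.eqb_eq; auto|].
      apply negb_true_iff. apply Nat.eqb_neq. congruence.
  - fold (c2 f x) in A. rewrite Hb in A. simpl in A. apply andb_true_iff in A as [A1 A2].
    apply Nat.eqb_eq in A1. apply negb_true_iff, Nat.eqb_neq in A2. auto.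
Qed.

Lemma beta2_cases x z : beta f x = 2 -> f z = x -> z = c1 f x \/ z = c2 f x.
Proof.
  intros H Hz. destruct (beta2_c2 x H) as [A B].
  destruct (Hf x) as [_ T]. destruct (T z (c1 f x) (c2 f x) Hz (c1_pre x) A) as [E|[E|E]]; auto.
  congruence.
Qed.

Lemma beta2_of x y z : f y = x -> f z = x -> y <> z -> beta f x = 2.
Proof. intros. apply beta2_iff. exists y, z. auto. Qed.

End S21.

Lemma iter_S (f : nat -> nat) n a : Nat.iter (S n) f a = f (Nat.iter n f a).
Proof. reflexivity. Qed.
Lemma iter_Sr (f : nat -> nat) n a : Nat.iter (S n) f a = Nat.iter n f (f a).
Proof. induction n; [reflexivity|]. change (f (Nat.iter (S n) f a) = Nat.iter (S n) f (f a)). rewrite IHn. reflexivity. Qed.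
Lemma iter_add (f : nat -> nat) n m a : Nat.iter (n + m) f a = Nat.iter n f (Nat.iter m f a).
Proof. induction n; simpl; [reflexivity| rewrite IHn; reflexivity]. Qed.

Lemma depth_uniq f a0 a n m : ~ cyclic f a0 -> Nat.iter n f a = a0 -> Nat.iter m f a = a0 -> n = m.
Proof.
  intros Hc Hn Hm. destruct (lt_eq_lt_dec n m) as [[h|h]|h]; auto; exfalso; apply Hc.
  - exists (m - n). split; [lia|]. rewrite <- Hn at 1. rewrite <- iter_add.
    replace (m - n + n) with m by lia. auto.
  - exists (n - m). split; [lia|]. rewrite <- Hm at 1. rewrite <- iter_add.
    replace (n - m + m) with n by lia. auto.
Qed.

Lemma tree_pre f u z z' : tree f u z -> f z' = z -> tree f u z'.
Proof. intros [n Hn] H. exists (S n). rewrite iter_Sr, H. auto. Qed.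

Lemma tree_root f u : tree f u u.
Proof. exists 0. reflexivity. Qed.

Lemma noncyc_fu f u : ~ cyclic f u -> ~ tree f u (f u).
Proof. intros Hc [n Hn]. apply Hc. exists (S n). split; [lia|]. rewrite iter_Sr. auto. Qed.

Lemma tree_f f u z : tree f u z -> z <> u -> tree f u (f z).
Proof.
  intros [n Hn] Hne. destruct n; simpl in Hn; [congruence|]. exists n. rewrite <- iter_Sr. auto.
Qed.

Lemma cyc_f f x : cyclic f x -> cyclic f (f x).
Proof.
  intros [n [Hn E]]. exists n. split; auto. rewrite <- iter_Sr, iter_S, E. reflexivity.
Qed.

Lemma cyc_iter f k x : cyclic f x -> cyclic f (Nat.iter k f x).
Proof. induction k; simpl; auto. intros; apply cyc_f; auto. Qed.

Lemma tree_noncyc f u z : ~ cyclic f u -> tree f u z -> ~ cyclic f z.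
Proof. intros Hu [n Hn] Hz. apply Hu. rewrite <- Hn. apply cyc_iter; auto. Qed.

Section Walk.
Variables f g : nat -> nat.
Hypothesis Hf : is_21_structure f.
Hypothesis Hg : is_21_structure g.
Variables a0 b0 : nat.
Hypothesis Ha0 : ~ cyclic f a0.
Hypothesis Hb0 : ~ cyclic g b0.
Variable Rr : nat -> nat -> Prop.
Variable ch : nat -> nat -> nat -> nat.
Hypothesis H0 : Rr a0 b0.
Hypothesis H1 : forall x y, Rr x y -> beta f x = beta g y.
Hypothesis H2 : forall x y x', Rr x y -> f x' = x -> g (ch x y x') = y /\ Rr x' (ch x y x').
Hypothesis H3 : forall x y x1 x2, Rr x y -> f x1 = x -> f x2 = x -> ch x y x1 = ch x y x2 -> x1 = x2.

Fixpoint W (n : nat) (a : nat) : nat :=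
  match n with 0 => b0 | S m => ch (f a) (W m (f a)) a end.

Definition depth (a : nat) : nat := lst (fun n => Nat.iter n f a =? a0).

Lemma depth_spec a n : Nat.iter n f a = a0 -> depth a = n.
Proof.
  intros H. unfold depth. apply lst_unique.
  - apply Nat.eqb_eq; auto.
  - intros m Hm. apply Nat.eqb_neq. intro E. pose proof (depth_uniq f a0 a m n Ha0 E H). lia.
Qed.

Definition hW (a : nat) : nat := W (depth a) a.

Lemma W_inv : forall n a, Nat.iter n f a = a0 -> Rr a (W n a) /\ Nat.iter n g (W n a) = b0.
Proof.
  induction n as [|n IH]; intros a Ha.
  - simpl in *. subst. auto.
  - rewrite iter_Sr in Ha. destruct (IH _ Ha) as [R1 E1]. change (W (S n) a) with (ch (f a) (W n (f a)) a).
    destruct (H2 _ _ a R1 eq_refl) as [A B]. split; auto. rewrite iter_Sr, A. auto.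
Qed.

Lemma ch_surj x y b : Rr x y -> g b = y -> exists x', f x' = x /\ ch x y x' = b.
Proof.
  intros R Hb. pose proof (H1 _ _ R) as Eb.
  destruct (beta_cases f x) as [B1|B2].
  - exists (c1 f x). split; [apply c1_pre; auto|].
    destruct (H2 x y (c1 f x) R (c1_pre f Hf x)) as [A _].
    rewrite (beta1_uniq g Hg y b) by congruence.
    apply (beta1_uniq g Hg y); congruence.
  - destruct (beta2_c2 f x B2) as [A2 N2].
    destruct (H2 x y (c1 f x) R (c1_pre f Hf x)) as [A _].
    destruct (H2 x y (c2 f x) R A2) as [A' _].
    assert (ch x y (c1 f x) <> ch x y (c2 f x)).
    { intro E. apply N2. symmetry. apply (H3 x y); auto. apply c1_pre; auto. }
    destruct (Hg y) as [_ T]. destruct (T b _ _ Hb A A') as [E|[E|E]].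
    + exists (c1 f x). split; auto. apply c1_pre; auto.
    + exists (c2 f x). split; auto.
    + contradiction.
Qed.

Lemma W_surj : forall n b, Nat.iter n g b = b0 -> exists a, Nat.iter n f a = a0 /\ W n a = b.
Proof.
  induction n as [|n IH]; intros b Hb.
  - exists a0. simpl in *. auto.
  - rewrite iter_Sr in Hb. destruct (IH _ Hb) as [ap [Ea Wa]].
    destruct (W_inv n ap Ea) as [R _]. rewrite Wa in R.
    destruct (ch_surj ap (g b) b R eq_refl) as [x' [Fx Cx]].
    exists x'. split.
    + rewrite iter_Sr, Fx. auto.
    + simpl. rewrite Fx, Wa. auto.
Qed.

Lemma W_inj : forall n a a', Nat.iter n f a = a0 -> Nat.iter n f a' = a0 -> W n a = W n a' -> a = a'.
Proof.
  induction n as [|n IH]; intros a a' Ha Ha' E.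
  - simpl in *. congruence.
  - rewrite iter_Sr in Ha, Ha'. simpl in E.
    destruct (W_inv n (f a) Ha) as [Ra _]. destruct (W_inv n (f a') Ha') as [Ra' _].
    destruct (H2 _ _ a Ra eq_refl) as [Ga _]. destruct (H2 _ _ a' Ra' eq_refl) as [Ga' _].
    assert (Efa : f a = f a').
    { apply IH; auto. rewrite <- Ga, <- Ga'. congruence. }
    rewrite <- Efa in E. apply (H3 (f a) (W n (f a))); auto.
Qed.

Lemma hW_spec a : tree f a0 a -> Rr a (hW a) /\ tree g b0 (hW a) /\ Nat.iter (depth a) g (hW a) = b0.
Proof.
  intros [n Hn]. unfold hW. rewrite (depth_spec a n Hn). destruct (W_inv n a Hn) as [A B].
  split; auto. split; auto. exists n; auto.
Qed.

Lemma hW_parent a : tree f a0 a -> a <> a0 -> g (hW a) = hW (f a).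
Proof.
  intros [n Hn] Hne. destruct n as [|n]; [simpl in Hn; congruence|].
  unfold hW. rewrite (depth_spec a (S n) Hn). rewrite iter_Sr in Hn.
  rewrite (depth_spec (f a) n Hn). simpl.
  destruct (W_inv n (f a) Hn) as [R _]. destruct (H2 _ _ a R eq_refl); auto.
Qed.

Lemma hW_inj a a' : tree f a0 a -> tree f a0 a' -> hW a = hW a' -> a = a'.
Proof.
  intros Ta Ta' E. destruct (hW_spec a Ta) as [_ [_ Da]]. destruct (hW_spec a' Ta') as [_ [_ Da']].
  rewrite E in Da. pose proof (depth_uniq g b0 _ _ _ Hb0 Da Da') as Ed.
  destruct Ta as [n Hn]. destruct Ta' as [n' Hn'].
  rewrite (depth_spec a n Hn) in Ed. rewrite (depth_spec a' n' Hn') in Ed. subst n'.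
  unfold hW in E. rewrite (depth_spec a n Hn), (depth_spec a' n Hn') in E.
  apply (W_inj n); auto.
Qed.

Lemma hW_iso : digraph_iso (tree f a0) (tree_edge f a0) (tree g b0) (tree_edge g b0) hW.
Proof.
  split; [|split; [|split]].
  - intros a Ta. apply hW_spec; auto.
  - apply hW_inj.
  - intros b [n Hn]. destruct (W_surj n b Hn) as [a [Ha Wa]]. exists a. split.
    + exists n; auto.
    + unfold hW. rewrite (depth_spec a n Ha). auto.
  - intros a b Ta Tb. unfold tree_edge. split.
    + intros [_ [_ E]]. subst b.
      assert (a <> a0). { intro; subst. apply (noncyc_fu f a0 Ha0 Tb). }
      split; [apply hW_spec; auto|]. split; [apply hW_spec; auto|].
      symmetry. apply hW_parent; auto.
    + intros [_ [_ E]]. split; auto. split; auto.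
      assert (Hne : a <> a0).
      { intro; subst. unfold hW in E. rewrite (depth_spec a0 0 eq_refl) in E. simpl in E.
        destruct (hW_spec b Tb) as [_ [Tb' _]]. unfold hW in Tb'; rewrite E in Tb'. apply (noncyc_fu g b0 Hb0 Tb'). }
      rewrite hW_parent in E; auto. apply hW_inj; auto. apply tree_f; auto.
Qed.

End Walk.


Fixpoint TI (f g : nat -> nat) (n : nat) (u v : nat) : Prop :=
  match n with
  | 0 => True
  | S m => beta f u = beta g v /\
      (beta f u = 1 -> TI f g m (c1 f u) (c1 g v)) /\
      (beta f u = 2 -> (TI f g m (c1 f u) (c1 g v) /\ TI f g m (c2 f u) (c2 g v)) \/
                        (TI f g m (c1 f u) (c2 g v) /\ TI f g m (c2 f u) (c1 g v)))
  end.

Definition RR f g u v := forall n, TI f g n u v.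

Lemma TI_mono f g : forall n u v, TI f g (S n) u v -> TI f g n u v.
Proof.
  induction n as [|n IH]; intros u v H; [exact I|].
  destruct H as [Hb [H1 H2]]. split; auto. split.
  - intros; apply IH; auto.
  - intros E. destruct (H2 E) as [[A B]|[A B]]; [left|right]; split; apply IH; auto.
Qed.

Lemma TI_mono_le f g n m u v : n <= m -> TI f g m u v -> TI f g n u v.
Proof.
  intros Hle. induction Hle; auto. intros H. apply IHHle. apply TI_mono; auto.
Qed.

Lemma TI_sym f g : forall n u v, TI f g n u v -> TI g f n v u.
Proof.
  induction n as [|n IH]; intros u v H; [exact I|].
  destruct H as [Hb [H1 H2]]. split; auto. split.
  - intros E. apply IH. apply H1. congruence.
  - intros E. destruct (H2 ltac:(congruence)) as [[A B]|[A B]]; [left|right]; split; apply IH; auto.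
Qed.

Lemma TI_trans f g h : forall n u v w, TI f g n u v -> TI g h n v w -> TI f h n u w.
Proof.
  induction n as [|n IH]; intros u v w H K; [exact I|].
  destruct H as [Hb [H1 H2]]. destruct K as [Kb [K1 K2]]. split; [congruence|]. split.
  - intros E. apply IH with (c1 g v); auto. apply K1. congruence.
  - intros E. destruct (H2 E) as [[A B]|[A B]]; destruct (K2 ltac:(congruence)) as [[C D]|[C D]].
    + left; split; eauto.
    + right; split; eauto.
    + right; split; eauto.
    + left; split; eauto.
Qed.

Lemma RR_sym f g u v : RR f g u v -> RR g f v u.
Proof. intros H n. apply TI_sym; auto. Qed.
Lemma RR_trans f g h u v w : RR f g u v -> RR g h v w -> RR f h u w.
Proof. intros H K n. eapply TI_trans; eauto. Qed.

Lemma RR_beta f g u v : RR f g u v -> beta f u = beta g v.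
Proof. intros H. apply (H 1). Qed.

Lemma RR_beta1 f g u v : RR f g u v -> beta f u = 1 -> RR f g (c1 f u) (c1 g v).
Proof. intros H E n. exact (proj1 (proj2 (H (S n))) E). Qed.

Lemma RR_beta2 f g u v : RR f g u v -> beta f u = 2 ->
  (RR f g (c1 f u) (c1 g v) /\ RR f g (c2 f u) (c2 g v)) \/
  (RR f g (c1 f u) (c2 g v) /\ RR f g (c2 f u) (c1 g v)).
Proof.
  intros H E.
  destruct (classic (forall n, TI f g n (c1 f u) (c1 g v) /\ TI f g n (c2 f u) (c2 g v))) as [A|A].
  - left. split; intro n; apply A.
  - right. apply not_all_ex_not in A as [N HN].
    assert (X : forall n, N <= n -> TI f g n (c1 f u) (c2 g v) /\ TI f g n (c2 f u) (c1 g v)).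
    { intros n Hn. destruct (H (S n)) as [_ [_ B]]. destruct (B E) as [[C D]|C]; auto.
      exfalso. apply HN. split; eapply TI_mono_le; eauto. }
    split; intro n; destruct (X (max n N) ltac:(lia)) as [P Q]; [apply (TI_mono_le f g n (max n N)); [lia|exact P] | apply (TI_mono_le f g n (max n N)); [lia|exact Q]].
Qed.

Definition phiB (f g : nat -> nat) (L : nat -> nat -> bool) (u v : nat) : bool :=
  (beta f u =? beta g v) &&
  (if beta f u =? 1 then L (c1 f u) (c1 g v)
   else (L (c1 f u) (c1 g v) && L (c2 f u) (c2 g v)) ||
        (L (c1 f u) (c2 g v) && L (c2 f u) (c1 g v))).

Fixpoint TT (f g : nat -> nat) (B n u v : nat) : bool :=
  match n with
  | 0 => true
  | S m => if (u <? B) && (v <? B) then phiB f g (TT f g B m) u v else true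
  end.

Lemma TT_of_TI f g B : forall n u v, TI f g n u v -> TT f g B n u v = true.
Proof.
  induction n as [|n IH]; intros u v H; simpl; auto.
  destruct ((u <? B) && (v <? B)); auto. destruct H as [Hb [H1 H2]]. unfold phiB.
  rewrite Hb, Nat.eqb_refl. simpl.
  destruct (beta_cases g v) as [E|E]; rewrite E.
  - simpl. apply IH. apply H1. congruence.
  - simpl. destruct (H2 ltac:(congruence)) as [[A C]|[A C]]; rewrite (IH _ _ A), (IH _ _ C).
    + reflexivity.
    + apply orb_true_r.
Qed.

Lemma TT_mono f g B : forall n u v, TT f g B (S n) u v = true -> TT f g B n u v = true.
Proof.
  induction n as [|n IH]; intros u v H; [reflexivity|].
  cbn [TT] in *. destruct ((u <? B) && (v <? B)); auto. unfold phiB in *.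
  apply andb_true_iff in H as [H0 H]. rewrite H0. simpl.
  destruct (beta f u =? 1); auto.
  apply orb_true_iff in H as [H|H]; apply andb_true_iff in H as [A C];
    rewrite (IH _ _ A), (IH _ _ C). reflexivity. apply orb_true_r.
Qed.

Lemma TT_mono_le f g B n m u v : n <= m -> TT f g B m u v = true -> TT f g B n u v = true.
Proof. intros Hle. induction Hle; auto. intros H. apply IHHle. apply TT_mono; auto. Qed.

Fixpoint bnd (f : nat -> nat) (n u : nat) : nat :=
  match n with 0 => S u | S m => max (S u) (max (bnd f m (c1 f u)) (bnd f m (c2 f u))) end.

Lemma bnd_ge f n u : S u <= bnd f n u.
Proof. destruct n; cbn [bnd]; lia. Qed.

Lemma TT_to_TI f g : forall n B u v, bnd f n u <= B -> bnd g n v <= B ->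
  TT f g B n u v = true -> TI f g n u v.
Proof.
  induction n as [|n IH]; intros B u v Hu Hv H; [exact I|].
  cbn [bnd] in Hu, Hv. cbn [TT] in H.
  replace ((u <? B) && (v <? B)) with true in H.
  2:{ symmetry. apply andb_true_iff. split; apply Nat.ltb_lt; lia. }
  unfold phiB in H. apply andb_true_iff in H as [H0 H]. apply Nat.eqb_eq in H0.
  split; auto. split.
  - intros E. rewrite E in H. simpl in H. apply (IH B); auto; lia.
  - intros E. rewrite E in H. simpl in H.
    apply orb_true_iff in H as [H|H]; apply andb_true_iff in H as [A C]; [left|right];
      split; apply (IH B); auto; lia.
Qed.

Lemma TT_complete f g u v : (forall m, TT f g m m u v = true) -> RR f g u v.
Proof.
  intros H n. set (m := max n (max (bnd f n u) (bnd g n v))).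
  apply (TT_to_TI f g n m); try lia. apply TT_mono_le with m; [lia|]. apply H.
Qed.

Lemma TT_sound f g u v B m : RR f g u v -> TT f g B m u v = true.
Proof. intros H. apply TT_of_TI. apply H. Qed.

Section Easy.
Variables f g : nat -> nat.
Hypothesis Hf : is_21_structure f.
Hypothesis Hg : is_21_structure g.
Variables u v : nat.
Hypothesis Hu : ~ cyclic f u.
Hypothesis Hv : ~ cyclic g v.
Variable H : nat -> nat.
Hypothesis Hiso : digraph_iso (tree f u) (tree_edge f u) (tree g v) (tree_edge g v) H.

Lemma pre_map z z' : tree f u z -> f z' = z -> g (H z') = H z.
Proof.
  intros Tz E. destruct Hiso as [Hm [Hi [Hs He]]].
  assert (Tz' : tree f u z') by (eapply tree_pre; eauto).
  destruct (He z' z Tz' Tz) as [A _]. destruct (A ltac:(split; auto)) as [_ [_ B]]. auto.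
Qed.

Lemma pre_back z w : tree f u z -> g w = H z -> exists z', f z' = z /\ H z' = w /\ tree f u z'.
Proof.
  intros Tz E. destruct Hiso as [Hm [Hi [Hs He]]].
  assert (Tw : tree g v w) by (eapply tree_pre; eauto).
  destruct (Hs w Tw) as [z' [Tz' Ez']]. subst w.
  destruct (He z' z Tz' Tz) as [_ A]. destruct (A ltac:(split; auto)) as [_ [_ B]]. eauto.
Qed.

Lemma H_inj a b : tree f u a -> tree f u b -> H a = H b -> a = b.
Proof. destruct Hiso as [_ [Hi _]]. auto. Qed.

Lemma easy_beta z : tree f u z -> beta f z = beta g (H z).
Proof.
  intros Tz. destruct (beta_cases f z) as [E|E]; destruct (beta_cases g (H z)) as [E'|E']; try congruence.
  - exfalso. apply beta2_iff in E' as [w1 [w2 [N [A B]]]].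
    destruct (pre_back z w1 Tz A) as [z1 [F1 [G1 T1]]].
    destruct (pre_back z w2 Tz B) as [z2 [F2 [G2 T2]]].
    assert (beta f z = 2) by (apply beta2_of with z1 z2; auto; congruence). congruence.
  - exfalso. destruct (beta2_c2 f z E) as [A N].
    assert (T1 : tree f u (c1 f z)) by exact (tree_pre f u z (c1 f z) Tz (c1_pre f Hf z)).
    assert (T2 : tree f u (c2 f z)) by exact (tree_pre f u z (c2 f z) Tz A).
    assert (beta g (H z) = 2).
    { apply beta2_of with (H (c1 f z)) (H (c2 f z)).
      - apply pre_map; auto. apply c1_pre; auto.
      - apply pre_map; auto.
      - intro K. apply N. symmetry. apply H_inj; auto. }
    congruence.
Qed.

Lemma easy_TI : forall n z, tree f u z -> TI f g n z (H z).
Proof.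
  induction n as [|n IH]; intros z Tz; [exact I|].
  pose proof (easy_beta z Tz) as Eb.
  assert (T1 : tree f u (c1 f z)) by exact (tree_pre f u z (c1 f z) Tz (c1_pre f Hf z)).
  assert (P1 : g (H (c1 f z)) = H z) by (apply pre_map; auto; apply c1_pre; auto).
  split; auto. split.
  - intros E. rewrite <- (beta1_uniq g Hg (H z) (H (c1 f z))); auto. congruence.
  - intros E. destruct (beta2_c2 f z E) as [A N].
    assert (T2 : tree f u (c2 f z)) by exact (tree_pre f u z (c2 f z) Tz A).
    assert (P2 : g (H (c2 f z)) = H z) by (apply pre_map; auto).
    assert (NH : H (c1 f z) <> H (c2 f z)) by (intro K; apply N; symmetry; apply H_inj; auto).
    destruct (beta2_cases g Hg (H z) _ ltac:(congruence) P1) as [X|X];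
    destruct (beta2_cases g Hg (H z) _ ltac:(congruence) P2) as [Y|Y]; try congruence.
    + left. rewrite <- X, <- Y. auto.
    + right. rewrite <- X, <- Y. auto.
Qed.

Lemma easy_root : H u = v.
Proof.
  destruct Hiso as [Hm [Hi [Hs He]]].
  destruct (Hm u (tree_root f u)) as [k Hk].
  destruct k as [|k]; [simpl in Hk; auto|]. exfalso.
  assert (Tg : tree g v (g (H u))) by (exists k; rewrite <- iter_Sr; auto).
  destruct (Hs _ Tg) as [z [Tz Ez]].
  destruct (He u z (tree_root f u) Tz) as [_ A].
  destruct (A ltac:(split; [apply Hm, tree_root|split; auto])) as [_ [_ B]].
  subst z. apply (noncyc_fu f u Hu Tz).
Qed.

Lemma easy_RR : RR f g u v.
Proof. intros n. rewrite <- easy_root. apply easy_TI. apply tree_root. Qed.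

End Easy.

Lemma Tree_iso_RR f g u v : is_21_structure f -> is_21_structure g -> ~ cyclic f u -> ~ cyclic g v ->
  Tree_iso f g u v -> RR f g u v.
Proof. intros Hf Hg Hu Hv [H Hi]. eapply easy_RR; eauto. Qed.

Definition str f g x y x' := if x' =? c1 f x then c1 g y else c2 g y.
Definition crs f g x y x' := if x' =? c1 f x then c2 g y else c1 g y.

Definition good_ch (f g : nat -> nat) (ch : nat -> nat -> nat -> nat) :=
  forall x y, ~ cyclic f x -> RR f g x y ->
    (beta f x = 1 /\ forall x', ch x y x' = c1 g y) \/
    (beta f x = 2 /\ RR f g (c1 f x) (c1 g y) /\ RR f g (c2 f x) (c2 g y) /\ forall x', ch x y x' = str f g x y x') \/
    (beta f x = 2 /\ RR f g (c1 f x) (c2 g y) /\ RR f g (c2 f x) (c1 g y) /\ forall x', ch x y x' = crs f g x y x').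

Section Good.
Variables f g : nat -> nat.
Hypothesis Hf : is_21_structure f.
Hypothesis Hg : is_21_structure g.
Variable ch : nat -> nat -> nat -> nat.
Hypothesis Hch : good_ch f g ch.

Lemma good_H2 x y x' : ~ cyclic f x -> RR f g x y -> f x' = x -> g (ch x y x') = y /\ RR f g x' (ch x y x').
Proof.
  intros Nc R E. pose proof (RR_beta f g x y R) as Eb.
  destruct (Hch x y Nc R) as [[B C]|[[B [R1 [R2 C]]]|[B [R1 [R2 C]]]]]; rewrite C.
  - rewrite (beta1_uniq f Hf x x' B E). split; [apply c1_pre; auto|]. apply RR_beta1; auto.
  - destruct (beta2_c2 g y ltac:(congruence)) as [A _]. unfold str.
    destruct (Nat.eqb_spec x' (c1 f x)) as [e|e].
    + rewrite e. split; auto. apply c1_pre; auto.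
    + destruct (beta2_cases f Hf x x' B E) as [e'|e']; [contradiction|rewrite e']. split; auto.
  - destruct (beta2_c2 g y ltac:(congruence)) as [A _]. unfold crs.
    destruct (Nat.eqb_spec x' (c1 f x)) as [e|e].
    + rewrite e. split; auto.
    + destruct (beta2_cases f Hf x x' B E) as [e'|e']; [contradiction|rewrite e']. split; auto. apply c1_pre; auto.
Qed.

Lemma good_H3 x y x1 x2 : ~ cyclic f x -> RR f g x y -> f x1 = x -> f x2 = x -> ch x y x1 = ch x y x2 -> x1 = x2.
Proof.
  intros Nc R E1 E2 E. pose proof (RR_beta f g x y R) as Eb.
  destruct (Hch x y Nc R) as [[B C]|[[B [R1 [R2 C]]]|[B [R1 [R2 C]]]]]; rewrite !C in E.
  - rewrite (beta1_uniq f Hf x x1 B E1), (beta1_uniq f Hf x x2 B E2). auto.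
  - destruct (beta2_c2 g y ltac:(congruence)) as [_ N]. destruct (beta2_c2 f x B) as [_ N'].
    unfold str in E.
    destruct (beta2_cases f Hf x x1 B E1) as [e1|e1]; destruct (beta2_cases f Hf x x2 B E2) as [e2|e2];
    rewrite e1, e2 in *; auto; rewrite ?Nat.eqb_refl in E;
    try (rewrite (proj2 (Nat.eqb_neq (c2 f x) (c1 f x)) N') in E); congruence.
  - destruct (beta2_c2 g y ltac:(congruence)) as [_ N]. destruct (beta2_c2 f x B) as [_ N'].
    unfold crs in E.
    destruct (beta2_cases f Hf x x1 B E1) as [e1|e1]; destruct (beta2_cases f Hf x x2 B E2) as [e2|e2];
    rewrite e1, e2 in *; auto; rewrite ?Nat.eqb_refl in E;
    try (rewrite (proj2 (Nat.eqb_neq (c2 f x) (c1 f x)) N') in E); congruence.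
Qed.

Lemma noncyc_pre x x' : ~ cyclic f x -> f x' = x -> ~ cyclic f x'.
Proof. intros N E C. apply N. rewrite <- E. apply cyc_f; auto. Qed.

Definition Rr' x y := RR f g x y /\ ~ cyclic f x.

Lemma good_H2' x y x' : Rr' x y -> f x' = x -> g (ch x y x') = y /\ Rr' x' (ch x y x').
Proof.
  intros [R N] E. destruct (good_H2 x y x' N R E). split; auto. split; auto.
  eapply noncyc_pre; eauto.
Qed.

Lemma good_iso a0 b0 : ~ cyclic f a0 -> ~ cyclic g b0 -> RR f g a0 b0 ->
  digraph_iso (tree f a0) (tree_edge f a0) (tree g b0) (tree_edge g b0) (hW f a0 b0 ch).
Proof.
  intros Ha Hb R. apply hW_iso with (Rr := Rr'); auto.
  - split; auto.
  - intros x y [A _]. apply RR_beta; auto.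
  - apply good_H2'.
  - intros x y x1 x2 [A B]. apply good_H3; auto.
Qed.

Lemma good_inv a0 b0 a : ~ cyclic f a0 -> RR f g a0 b0 -> tree f a0 a -> RR f g a (hW f a0 b0 ch a).
Proof.
  intros Ha R T. apply (hW_spec f g a0 b0 Ha Rr' ch); auto.
  - split; auto.
  - apply good_H2'.
Qed.

End Good.

Definition chc (f g : nat -> nat) (x y x' : nat) : nat :=
  if beta f x =? 1 then c1 g y
  else if excluded_middle_informative (RR f g (c1 f x) (c1 g y) /\ RR f g (c2 f x) (c2 g y))
       then str f g x y x' else crs f g x y x'.

Lemma chc_good f g : good_ch f g (chc f g).
Proof.
  intros x y _ R. unfold chc. destruct (beta_cases f x) as [E|E]; rewrite E; simpl.
  - left. auto.
  - right. destruct excluded_middle_informative as [A|A].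
    + left. tauto.
    + right. destruct (RR_beta2 f g x y R E) as [C|C]; [tauto|]. tauto.
Qed.

Lemma RR_Tree_iso f g u v : is_21_structure f -> is_21_structure g -> ~ cyclic f u -> ~ cyclic g v ->
  RR f g u v -> Tree_iso f g u v.
Proof.
  intros Hf Hg Hu Hv R. exists (hW f u v (chc f g)). apply good_iso; auto. apply chc_good.
Qed.


Definition un (h : nat -> nat) (ys : list nat) : nat := h (hd 0 ys).
Definition D1s (P : nat -> Prop) (ys : list nat) : Prop := exists x, ys = [x] /\ P x.

Definition U (h : nat -> nat) (D : nat -> Prop) (H : cmpD (D1s D) (un h)) (a : exp) : exp :=
  Ap (un h) (D1s D) H (es [a]).
Lemma den_U h D H a env : den (U h D H a) env = h (den a env).
Proof. reflexivity. Qed.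
Lemma dfd_U h D H a env : dfd a env -> D (den a env) -> dfd (U h D H a) env.
Proof. intros. cbn. split; [tauto|]. exists (den a env). auto. Qed.

Lemma dfd_V i env : dfd (V i) env.
Proof. exact I. Qed.

Lemma eqb0_mul a b : (a * b =? 0) = (a =? 0) || (b =? 0).
Proof. destruct a, b; simpl; auto. rewrite Nat.mul_comm. simpl. auto. Qed.
Lemma eqb0_add a b : (a + b =? 0) = (a =? 0) && (b =? 0).
Proof. destruct a, b; simpl; auto. Qed.

#[export] Hint Resolve dfd_V dfd_cst dfd_PRED dfd_ADD dfd_SUB dfd_MUL dfd_SG dfd_NEQ dfd_ITE dfd_EQ
  dfd_LT dfd_POW2 dfd_DIV dfd_MOD dfd_BIT dfd_BSUM : dfd.

Definition TRUE (x : nat) : Prop := True.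

Section Kids.
Variable h : nat -> nat.
Hypothesis Hh21 : is_21_structure h.
Hypothesis Hh : cmpD (D1s TRUE) (un h).
Hypothesis Hbh : cmpD (D1s TRUE) (un (beta h)).

Definition c1E := Mu (NEQ (U h TRUE Hh (V 0)) (V 1)).
Lemma fn_c1E x : fn c1E [x] = c1 h x.
Proof.
  unfold fn, c1E, c1. cbn [den]. apply lst_ext. intros n.
  rewrite den_NEQ0, den_U. reflexivity.
Qed.
Lemma tot_c1E ys : dfn c1E ys.
Proof.
  unfold dfn, c1E. cbn [dfd]. split.
  - destruct (Hh21 (nth 0 ys 0)) as [[z Hz] _]. exists z.
    apply Nat.eqb_eq. rewrite den_NEQ0, den_U. apply Nat.eqb_eq. auto.
  - intros m. apply dfd_NEQ; auto with dfd. apply dfd_U; auto with dfd. exact I.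
Qed.
Definition C1 a := mkAp c1E 1 (es [a]).
Lemma den_C1 a env : den (C1 a) env = c1 h (den a env).
Proof. apply fn_c1E. Qed.
Lemma dfd_C1 a env : dfd a env -> dfd (C1 a) env.
Proof. intros. unfold C1. rewrite dfd_mkAp. cbn. split; auto. split; auto. apply tot_c1E. Qed.

Definition c2body := MUL (NEQ (U (beta h) TRUE Hbh (V 1)) (cst 1))
                         (ADD (NEQ (U h TRUE Hh (V 0)) (V 1)) (EQ (V 0) (C1 (V 1)))).
Lemma den_c2body z x : (den c2body [z; x] =? 0) =
   (beta h x =? 1) || ((h z =? x) && negb (z =? c1 h x)).
Proof.
  unfold c2body. rewrite den_MUL, eqb0_mul, den_NEQ0, den_ADD, eqb0_add, den_NEQ0, den_EQ.
  rewrite !den_U, den_C1, den_cst. cbn [den nth].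
  destruct (z =? c1 h x); reflexivity.
Qed.
Definition c2E := Mu c2body.
Lemma fn_c2E x : fn c2E [x] = c2 h x.
Proof.
  unfold fn, c2E, c2. cbn [den]. apply lst_ext. intros n. apply den_c2body.
Qed.
Lemma tot_c2E ys : dfn c2E ys.
Proof.
  unfold dfn, c2E. cbn [dfd]. split.
  - set (x := nth 0 ys 0).
    assert (Hb : forall n, den c2body (n :: ys) = den c2body [n; x]) by reflexivity.
    destruct (beta_cases h x) as [E|E].
    + exists 0. rewrite Hb. apply Nat.eqb_eq. rewrite den_c2body, E. reflexivity.
    + exists (c2 h x). rewrite Hb. apply Nat.eqb_eq. rewrite den_c2body.
      destruct (beta2_c2 h x E) as [A N]. rewrite A, Nat.eqb_refl.
      rewrite (proj2 (Nat.eqb_neq _ _) N). apply orb_true_r.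
  - intros m. unfold c2body. apply dfd_MUL; apply dfd_NEQ || apply dfd_ADD; auto with dfd.
    + apply dfd_U; auto with dfd. exact I.
    + apply dfd_NEQ; auto with dfd. apply dfd_U; auto with dfd. exact I.
    + apply dfd_EQ; auto with dfd. apply dfd_C1; auto with dfd.
Qed.
Definition C2 a := mkAp c2E 1 (es [a]).
Lemma den_C2 a env : den (C2 a) env = c2 h (den a env).
Proof. apply fn_c2E. Qed.
Lemma dfd_C2 a env : dfd a env -> dfd (C2 a) env.
Proof. intros. unfold C2. rewrite dfd_mkAp. cbn. split; auto. split; auto. apply tot_c2E. Qed.

Definition BE a := U (beta h) TRUE Hbh a.
Lemma dfd_BE a env : dfd a env -> dfd (BE a) env.
Proof. intros. apply dfd_U; auto. exact I. Qed.
Definition HE a := U h TRUE Hh a.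
Lemma dfd_HE a env : dfd a env -> dfd (HE a) env.
Proof. intros. apply dfd_U; auto. exact I. Qed.

End Kids.

#[export] Hint Resolve dfd_C1 dfd_C2 dfd_BE dfd_HE : dfd.


Definition b2n (b : bool) : nat := if b then 1 else 0.

Definition lookupB (r B a b : nat) : bool :=
  if (a <? B) && (b <? B) then bitn r (a * B + b) =? 1 else true.

Lemma bitn_le s p : bitn s p <= 1.
Proof. unfold bitn. pose proof (Nat.mod_upper_bound (s / 2 ^ p) 2 ltac:(lia)). lia. Qed.

Definition LK r B a b := ITE (MUL (LT a B) (LT b B)) (BIT r (ADD (MUL a B) b)) (cst 1).
Lemma den_LK r B a b env :
  den (LK r B a b) env = b2n (lookupB (den r env) (den B env) (den a env) (den b env)).
Proof.
  unfold LK, lookupB. rewrite den_ITE, den_MUL, !den_LT, den_BIT, den_ADD, den_MUL, den_cst.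
  destruct (den a env <? den B env); destruct (den b env <? den B env); simpl; auto.
  pose proof (bitn_le (den r env) (den a env * den B env + den b env)).
  destruct (bitn _ _) as [|[|]]; simpl; auto; lia.
Qed.
Lemma dfd_LK r B a b env : dfd r env -> dfd B env -> dfd a env -> dfd b env -> dfd (LK r B a b) env.
Proof. intros; unfold LK; auto 10 with dfd. Qed.
#[export] Hint Resolve dfd_LK : dfd.

Lemma bsum_ext F G N : (forall p, p < N -> F p = G p) -> bsum F N = bsum G N.
Proof. induction N; intros H; simpl; auto. rewrite IHN, H; auto. Qed.

Lemma b2n_le t : b2n t <= 1.
Proof. destruct t; simpl; lia. Qed.

Lemma b2n_eq1 t : (b2n t =? 1) = t.
Proof. destruct t; reflexivity. Qed.

Section Main.
Variables f g : nat -> nat.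
Hypothesis hf : is_21_structure f.
Hypothesis hg : is_21_structure g.
Hypothesis Hfc : cmpD (D1s TRUE) (un f).
Hypothesis Hgc : cmpD (D1s TRUE) (un g).
Hypothesis Hbf : cmpD (D1s TRUE) (un (beta f)).
Hypothesis Hbg : cmpD (D1s TRUE) (un (beta g)).
Hypothesis Hisoc : cmpD (D1s (split_hair f)) (un (iso_fun f)).

Definition C1f a := C1 f Hfc a.
Definition C2f a := C2 f Hfc Hbf a.
Definition C1g a := C1 g Hgc a.
Definition C2g a := C2 g Hgc Hbg a.
Definition Bf a := BE f Hbf a.
Definition Bg a := BE g Hbg a.

Lemma dfd_C1f a env : dfd a env -> dfd (C1f a) env.
Proof. intros; apply dfd_C1; auto. Qed.
Lemma dfd_C2f a env : dfd a env -> dfd (C2f a) env.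
Proof. intros; apply dfd_C2; auto. Qed.
Lemma dfd_C1g a env : dfd a env -> dfd (C1g a) env.
Proof. intros; apply dfd_C1; auto. Qed.
Lemma dfd_C2g a env : dfd a env -> dfd (C2g a) env.
Proof. intros; apply dfd_C2; auto. Qed.
Lemma dfd_Bf a env : dfd a env -> dfd (Bf a) env.
Proof. intros; apply dfd_BE; auto. Qed.
Lemma dfd_Bg a env : dfd a env -> dfd (Bg a) env.
Proof. intros; apply dfd_BE; auto. Qed.
Hint Resolve dfd_C1f dfd_C2f dfd_C1g dfd_C2g dfd_Bf dfd_Bg : dfd.

(* phi on env [u; v; B; r] *)
Definition phiE :=
  let L x y := LK (V 3) (V 2) x y in
  MUL (EQ (Bf (V 0)) (Bg (V 1)))
      (ITE (EQ (Bf (V 0)) (cst 1)) (L (C1f (V 0)) (C1g (V 1)))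
           (SG (ADD (MUL (L (C1f (V 0)) (C1g (V 1))) (L (C2f (V 0)) (C2g (V 1))))
                    (MUL (L (C1f (V 0)) (C2g (V 1))) (L (C2f (V 0)) (C1g (V 1))))))).

Lemma fn_phiE u v B r : fn phiE [u; v; B; r] = b2n (phiB f g (lookupB r B) u v).
Proof.
  unfold fn, phiE. rewrite den_MUL, !den_EQ, den_ITE, den_EQ, den_SG, den_ADD, !den_MUL, !den_LK.
  unfold Bf, Bg, C1f, C2f, C1g, C2g, BE. rewrite !den_U, !den_C1, !den_C2, den_cst. cbn [den nth]. unfold un. cbn [hd].
  unfold phiB.
  destruct (beta f u =? beta g v); simpl; [|reflexivity].
  destruct (beta f u =? 1); simpl; [rewrite Nat.add_0_r; reflexivity|].
  destruct (lookupB r B (c1 f u) (c1 g v)); destruct (lookupB r B (c2 f u) (c2 g v));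
  destruct (lookupB r B (c1 f u) (c2 g v)); destruct (lookupB r B (c2 f u) (c1 g v)); reflexivity.
Qed.
Lemma tot_phiE ys : dfn phiE ys.
Proof. unfold dfn, phiE. auto 20 with dfd. Qed.

(* table on env [B; j] *)
Definition tabE :=
  Rec (V 1) (BSUM (MUL (V 0) (V 0)) (cst 1))
      (BSUM (MUL (V 2) (V 2)) (mkAp phiE 4 (es [DIV (V 0) (V 4); MOD (V 0) (V 4); V 4; V 3]))).

Definition tab (B j : nat) : nat :=
  recv (fun i r => bsum (fun p => b2n (phiB f g (lookupB r B) (p / B) (p mod B))) (B * B))
       (bsum (fun _ => 1) (B * B)) j.

Lemma recv_ext st st' b n : (forall i r, st i r = st' i r) -> recv st b n = recv st' b n.
Proof. intros H. induction n; simpl; auto. rewrite IHn, H. auto. Qed.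

Lemma fn_tabE B j : fn tabE [B; j] = tab B j.
Proof.
  unfold fn, tabE, tab. cbn [den nth]. rewrite (den_BSUM _ _ _ (fun _ => 1)) by (intros; apply den_cst).
  rewrite den_MUL. cbn [den nth]. apply recv_ext. intros i r.
  rewrite (den_BSUM _ _ _ (fun p => b2n (phiB f g (lookupB r B) (p / B) (p mod B)))).
  - rewrite den_MUL. reflexivity.
  - intros p r'. rewrite den_mkAp. cbn [dens es]. rewrite den_DIV, den_MOD. cbn [den nth].
    rewrite fn_phiE. reflexivity.
Qed.

Lemma tot_tabE ys : dfn tabE ys.
Proof.
  unfold dfn, tabE. cbn [dfd]. split; [exact I|]. split.
  - apply dfd_BSUM; auto with dfd.
  - intros. apply dfd_BSUM; [auto with dfd|]. intros. rewrite dfd_mkAp. cbn [dfds dens es length].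
    split; [repeat (apply conj; [auto with dfd|]); exact I|]. split; [reflexivity| apply tot_phiE].
Qed.

Lemma divmod_id a b B : b < B -> (a * B + b) / B = a /\ (a * B + b) mod B = b.
Proof.
  intros H. split.
  - rewrite Nat.div_add_l by lia. rewrite Nat.div_small by lia. lia.
  - rewrite Nat.add_comm, Nat.Div0.mod_add. apply Nat.mod_small; auto.
Qed.

Lemma tab_ok B : forall j a b, lookupB (tab B j) B a b = TT f g B j a b.
Proof.
  assert (K : forall F, (forall p, F p <= 1) -> forall a b, a < B -> b < B ->
      bitn (bsum F (B * B)) (a * B + b) = F (a * B + b)).
  { intros F HF a b Ha Hb. apply bit_bsum; auto. nia. }
  induction j as [|j IH]; intros a b; unfold lookupB.
  - destruct (Nat.ltb_spec a B); destruct (Nat.ltb_spec b B); simpl; auto.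
    unfold tab. cbn [recv]. rewrite K; auto.
  - destruct (Nat.ltb_spec a B); destruct (Nat.ltb_spec b B); cbn [TT]; simpl; auto.
    + unfold tab at 1. cbn [recv]. fold (tab B j). rewrite K; auto.
      * destruct (divmod_id a b B) as [E1 E2]; auto. rewrite E1, E2. rewrite b2n_eq1.
        rewrite (proj2 (Nat.ltb_lt a B) H), (proj2 (Nat.ltb_lt b B) H0). cbn [andb].
        f_equal. apply functional_extensionality; intro x. apply functional_extensionality; intro y.
        apply IH.
      * intros; apply b2n_le.
    + replace (a <? B) with true by (symmetry; apply Nat.ltb_lt; auto).
      replace (b <? B) with false by (symmetry; apply Nat.ltb_ge; auto). reflexivity.
    + replace (a <? B) with false by (symmetry; apply Nat.ltb_ge; auto). reflexivity.
    + replace (a <? B) with false by (symmetry; apply Nat.ltb_ge; auto). reflexivity.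
Qed.

Definition TTQ B j u v := LK (mkAp tabE 2 (es [B; j])) B u v.
Lemma den_TTQ B j u v env : den (TTQ B j u v) env = b2n (TT f g (den B env) (den j env) (den u env) (den v env)).
Proof. unfold TTQ. rewrite den_LK, den_mkAp. cbn [dens es]. rewrite fn_tabE, tab_ok. reflexivity. Qed.
Lemma dfd_TTQ B j u v env : dfd B env -> dfd j env -> dfd u env -> dfd v env -> dfd (TTQ B j u v) env.
Proof.
  intros. unfold TTQ. apply dfd_LK; auto. rewrite dfd_mkAp. cbn [dfds dens es length].
  split; [tauto|]. split; auto. apply tot_tabE.
Qed.
Hint Resolve dfd_TTQ : dfd.

(* search on env [x; y] *)
Definition srchbody := MUL (TTQ (V 0) (V 0) (C1f (V 1)) (C1g (V 2)))
                           (TTQ (V 0) (V 0) (C1f (V 1)) (C2g (V 2))).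
Definition srchP x y m := negb (TT f g m m (c1 f x) (c1 g y)) || negb (TT f g m m (c1 f x) (c2 g y)).
Definition srch x y := lst (srchP x y).
Lemma den_srchbody m x y l : (den srchbody (m :: x :: y :: l) =? 0) = srchP x y m.
Proof.
  unfold srchbody, srchP. rewrite den_MUL, eqb0_mul, !den_TTQ. unfold C1f, C1g, C2g.
  rewrite !den_C1, den_C2, !den_V. cbn [nth].
  destruct (TT f g m m (c1 f x) (c1 g y)); destruct (TT f g m m (c1 f x) (c2 g y)); reflexivity.
Qed.
Definition srchE := Mu srchbody.
Lemma fn_srchE x y : fn srchE [x; y] = srch x y.
Proof. unfold fn, srchE, srch. rewrite den_Mu. apply lst_ext. intros. apply den_srchbody. Qed.
Lemma dfn_srchE x y : (exists m, srchP x y m = true) -> dfn srchE [x; y].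
Proof.
  intros [m Hm]. unfold dfn, srchE. cbn [dfd]. split.
  - exists m. apply Nat.eqb_eq. rewrite den_srchbody. auto.
  - intros. unfold srchbody. auto 10 with dfd.
Qed.

(* chooser on env [x; y; x'] *)
Definition ST := ITE (NEQ (V 2) (C1f (V 0))) (C2g (V 1)) (C1g (V 1)).
Definition CR := ITE (NEQ (V 2) (C1f (V 0))) (C1g (V 1)) (C2g (V 1)).
Definition MM := mkAp srchE 2 (es [V 0; V 1]).
Definition SB := ITE (TTQ MM MM (C1f (V 0)) (C1g (V 1))) ST CR.
Definition UI a := U (iso_fun f) (split_hair f) Hisoc a.
Definition chE := IfNZ (EQ (Bf (V 0)) (cst 2)) (IfNZ (SUB (cst 1) (UI (V 0))) SB ST) (C1g (V 1)).

Definition chooseM x y x' :=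
  if beta f x =? 2 then
    (if iso_fun f x =? 0 then
       (if TT f g (srch x y) (srch x y) (c1 f x) (c1 g y) then str f g x y x' else crs f g x y x')
     else str f g x y x')
  else c1 g y.

Lemma den_ST x y x' : den ST [x; y; x'] = str f g x y x'.
Proof.
  unfold ST, str. rewrite den_ITE, den_NEQ0. unfold C1f, C1g, C2g. rewrite !den_C1, den_C2.
  cbn [den nth]. destruct (x' =? c1 f x); reflexivity.
Qed.
Lemma den_CR x y x' : den CR [x; y; x'] = crs f g x y x'.
Proof.
  unfold CR, crs. rewrite den_ITE, den_NEQ0. unfold C1f, C1g, C2g. rewrite !den_C1, den_C2.
  cbn [den nth]. destruct (x' =? c1 f x); reflexivity.
Qed.

Lemma fn_chE x y x' : fn chE [x; y; x'] = chooseM x y x'.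
Proof.
  unfold fn, chE, chooseM. rewrite den_IfNZ, den_EQ. unfold Bf, BE. rewrite den_U, den_cst, den_V.
  cbn [nth]. destruct (beta f x =? 2); cbn [Nat.eqb].
  - rewrite den_IfNZ, den_SUB, den_cst. unfold UI. rewrite den_U, den_V. cbn [nth].
    destruct (iso_fun f x) as [|k] eqn:E; cbn [Nat.eqb Nat.sub].
    + unfold SB. rewrite den_ITE, den_TTQ. unfold MM. rewrite den_mkAp. cbn [dens es].
      rewrite !den_V. cbn [nth].
      rewrite fn_srchE. unfold C1f, C1g. rewrite !den_C1, !den_V. cbn [nth].
      destruct (TT f g (srch x y) (srch x y) (c1 f x) (c1 g y)); cbn [b2n Nat.eqb]; [apply den_ST|apply den_CR].
    + apply den_ST.
  - unfold C1g. rewrite den_C1, den_V. reflexivity.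
Qed.

Lemma dfn_chE x y x' : (beta f x = 2 -> iso_fun f x = 0 -> exists m, srchP x y m = true) ->
  dfn chE [x; y; x'].
Proof.
  intros Hs. unfold dfn, chE. cbn [dfd]. split; [auto 10 with dfd|]. split; [auto with dfd|].
  intros Hc. rewrite den_EQ in Hc. unfold Bf, BE in Hc. rewrite den_U, den_cst in Hc.
  cbn [den nth] in Hc. destruct (Nat.eqb_spec (beta f x) 2) as [B2|]; [|contradiction].
  split; [|split].
  - apply dfd_SUB; auto with dfd. apply dfd_U; [exact I| exact B2].
  - unfold ST. auto 10 with dfd.
  - intros Hc'. rewrite den_SUB, den_cst in Hc'. unfold UI in Hc'. rewrite den_U in Hc'.
    cbn [den nth] in Hc'. assert (I0 : iso_fun f x = 0) by lia.
    unfold SB. apply dfd_ITE; [apply dfd_TTQ|unfold ST|unfold CR]; auto 10 with dfd.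
    + unfold MM. rewrite dfd_mkAp. cbn [dfds dens es length]. split; [exact (conj I (conj I I))|]. split; [reflexivity|].
      cbn [den nth]. apply dfn_srchE. apply Hs; auto.
    + unfold MM. rewrite dfd_mkAp. cbn [dfds dens es length]. split; [exact (conj I (conj I I))|]. split; [reflexivity|].
      cbn [den nth]. apply dfn_srchE. apply Hs; auto.
Qed.

End Main.


Section Final.
Variables f g : nat -> nat.
Hypothesis hf : is_21_structure f.
Hypothesis hg : is_21_structure g.

Lemma iso_facts x : ~ cyclic f x -> beta f x = 2 ->
  (iso_fun f x <> 0 -> RR f f (c1 f x) (c2 f x)) /\
  (iso_fun f x = 0 -> ~ Tree_iso f f (c1 f x) (c2 f x)).
Proof.
  intros Nc B2. destruct (beta2_c2 f x B2) as [A N].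
  assert (N1 : ~ cyclic f (c1 f x)) by (apply (noncyc_pre f x); auto; apply c1_pre; auto).
  assert (N2 : ~ cyclic f (c2 f x)) by (apply (noncyc_pre f x); auto).
  unfold iso_fun. destruct excluded_middle_informative as [E|E]; split; intros H; try congruence.
  - destruct E as [x1 [x2 [D [F1 [F2 T]]]]].
    destruct (beta2_cases f hf x x1 B2 F1) as [e1|e1]; destruct (beta2_cases f hf x x2 B2 F2) as [e2|e2];
      subst x1 x2; try congruence.
    + apply Tree_iso_RR; auto.
    + apply RR_sym. apply Tree_iso_RR; auto.
  - intros T. apply E. exists (c1 f x), (c2 f x). split; [congruence|]. split; [apply c1_pre; auto|]. auto.
Qed.

Lemma srch_ex x y : ~ cyclic f x -> RR f g x y -> beta f x = 2 -> iso_fun f x = 0 ->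
  exists m, srchP f g x y m = true.
Proof.
  intros Nc R B2 I0. apply NNPP. intros Hn.
  assert (Hall : forall m, TT f g m m (c1 f x) (c1 g y) = true /\ TT f g m m (c1 f x) (c2 g y) = true).
  { intros m. destruct (TT f g m m (c1 f x) (c1 g y)) eqn:E1; destruct (TT f g m m (c1 f x) (c2 g y)) eqn:E2;
    auto; exfalso; apply Hn; exists m; unfold srchP; rewrite E1, E2; reflexivity. }
  assert (R1 : RR f g (c1 f x) (c1 g y)) by (apply TT_complete; intro; apply Hall).
  assert (R2 : RR f g (c1 f x) (c2 g y)) by (apply TT_complete; intro; apply Hall).
  destruct (beta2_c2 f x B2) as [A N].
  assert (N1 : ~ cyclic f (c1 f x)) by (apply (noncyc_pre f x); auto; apply c1_pre; auto).
  assert (N2 : ~ cyclic f (c2 f x)) by (apply (noncyc_pre f x); auto).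
  assert (Rff : RR f f (c1 f x) (c2 f x)).
  { destruct (RR_beta2 f g x y R B2) as [[S1 S2]|[S1 S2]].
    - apply RR_trans with g (c2 g y); auto. apply RR_sym; auto.
    - apply RR_trans with g (c1 g y); auto. apply RR_sym; auto. }
  apply (proj2 (iso_facts x Nc B2) I0). apply RR_Tree_iso; auto.
Qed.

Lemma chooseM_good : good_ch f g (chooseM f g).
Proof.
  intros x y Nc R. destruct (beta_cases f x) as [B1|B2].
  - left. split; auto. intros x'. unfold chooseM. rewrite B1. reflexivity.
  - right. destruct (Nat.eqb_spec (iso_fun f x) 0) as [I0|I0].
    + destruct (lst_spec (srchP f g x y) (srch_ex x y Nc R B2 I0)) as [Sp _].
      fold (srch f g x y) in Sp. set (m := srch f g x y) in *.
      destruct (TT f g m m (c1 f x) (c1 g y)) eqn:T1.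
      * unfold srchP in Sp. rewrite T1 in Sp. simpl in Sp. apply negb_true_iff in Sp.
        assert (NR : ~ RR f g (c1 f x) (c2 g y)).
        { intro K. rewrite (TT_sound f g _ _ m m K) in Sp. discriminate. }
        left. destruct (RR_beta2 f g x y R B2) as [[S1 S2]|[S1 S2]]; [|tauto].
        repeat split; auto. intros x'. unfold chooseM. rewrite B2, I0. cbn [Nat.eqb].
        fold m. rewrite T1. reflexivity.
      * assert (NR : ~ RR f g (c1 f x) (c1 g y)).
        { intro K. rewrite (TT_sound f g _ _ m m K) in T1. discriminate. }
        right. destruct (RR_beta2 f g x y R B2) as [[S1 S2]|[S1 S2]]; [tauto|].
        repeat split; auto. intros x'. unfold chooseM. rewrite B2, I0. cbn [Nat.eqb].
        fold m. rewrite T1. reflexivity.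
    + assert (Rff := proj1 (iso_facts x Nc B2) I0).
      left. split; auto.
      assert (E : forall x', chooseM f g x y x' = str f g x y x').
      { intros x'. unfold chooseM. rewrite B2. cbn [Nat.eqb].
        destruct (iso_fun f x); [congruence|reflexivity]. }
      destruct (RR_beta2 f g x y R B2) as [[S1 S2]|[S1 S2]].
      * auto.
      * split; [|split; auto].
        -- apply RR_trans with f (c2 f x); auto.
        -- apply RR_trans with f (c1 f x); auto. apply RR_sym; auto.
Qed.

Hypothesis Hfc : cmpD (D1s TRUE) (un f).
Hypothesis Hgc : cmpD (D1s TRUE) (un g).
Hypothesis Hbf : cmpD (D1s TRUE) (un (beta f)).
Hypothesis Hbg : cmpD (D1s TRUE) (un (beta g)).
Hypothesis Hisoc : cmpD (D1s (split_hair f)) (un (iso_fun f)).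

Definition iterE := Rec (V 0) (V 1) (HE f Hfc (V 1)).
Lemma fn_iterE n a : fn iterE [n; a] = Nat.iter n f a.
Proof.
  unfold fn, iterE. rewrite den_Rec, !den_V. cbn [nth].
  rewrite (recv_ext _ (fun _ r => f r)).
  - induction n; cbn [recv]; auto. rewrite IHn. reflexivity.
  - intros. unfold HE. rewrite den_U, den_V. reflexivity.
Qed.
Lemma tot_iterE ys : dfn iterE ys.
Proof. unfold dfn, iterE. cbn [dfd]. split; [exact I|]. split; [exact I|]. intros. apply dfd_HE; exact I. Qed.
Definition ITER n a := mkAp iterE 2 (es [n; a]).
Lemma den_ITER n a env : den (ITER n a) env = Nat.iter (den n env) f (den a env).
Proof. unfold ITER. rewrite den_mkAp. cbn [dens es]. apply fn_iterE. Qed.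
Lemma dfd_ITER n a env : dfd n env -> dfd a env -> dfd (ITER n a) env.
Proof. intros. unfold ITER. rewrite dfd_mkAp. cbn [dfds dens es length]. split; [tauto|]. split; [reflexivity|apply tot_iterE]. Qed.
Hint Resolve dfd_ITER : dfd.

Variables a0 b0 : nat.

Definition stepE := mkAp (chE f g Hfc Hgc Hbf Hbg Hisoc) 3
   (es [ITER (SUB (V 2) (V 0)) (V 3); V 1; ITER (SUB (SUB (V 2) (V 0)) (cst 1)) (V 3)]).
Definition walkE := Rec (V 0) (cst b0) stepE.

Definition stp d a i r := chooseM f g (Nat.iter (d - i) f a) r (Nat.iter (d - i - 1) f a).

Lemma den_stepE i r d a : den stepE [i; r; d; a] = stp d a i r.
Proof.
  unfold stepE. rewrite den_mkAp. cbn [dens es]. rewrite !den_ITER, !den_SUB, !den_V, den_cst. cbn [nth].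
  rewrite fn_chE. reflexivity.
Qed.

Lemma fn_walkE d a : fn walkE [d; a] = recv (stp d a) b0 d.
Proof.
  unfold fn, walkE. rewrite den_Rec, den_V, den_cst. cbn [nth]. apply recv_ext. intros. apply den_stepE.
Qed.

Lemma recv_W d a : forall i, i <= d -> recv (stp d a) b0 i = W f b0 (chooseM f g) i (Nat.iter (d - i) f a).
Proof.
  induction i as [|i IH]; intros Hi; cbn [recv W]; auto.
  rewrite IH by lia. unfold stp.
  replace (d - i) with (S (d - S i)) by lia. rewrite iter_S.
  replace (S (d - S i) - 1) with (d - S i) by lia. reflexivity.
Qed.

Definition depthE := Mu (NEQ (ITER (V 0) (V 1)) (cst a0)).
Lemma den_depthE a : den depthE [a] = depth f a0 a.
Proof.
  unfold depthE, depth. rewrite den_Mu. apply lst_ext. intros n.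
  rewrite den_NEQ0, den_ITER, !den_V, den_cst. reflexivity.
Qed.

Definition topE := mkAp walkE 2 (es [depthE; V 0]).

Hypothesis Ha0 : ~ cyclic f a0.
Hypothesis Hb0 : ~ cyclic g b0.
Hypothesis R0 : RR f g a0 b0.

Lemma den_topE a : den topE [a] = hW f a0 b0 (chooseM f g) a.
Proof.
  unfold topE. rewrite den_mkAp. cbn [dens es]. rewrite den_depthE, den_V. cbn [nth].
  rewrite fn_walkE. rewrite recv_W by lia. rewrite Nat.sub_diag. reflexivity.
Qed.

Lemma dfd_topE a : tree f a0 a -> dfd topE [a].
Proof.
  intros Ta. unfold topE. rewrite dfd_mkAp. cbn [dfds dens es length].
  split; [split; [|exact (conj I I)]|split; [reflexivity|]].
  - unfold depthE. cbn [dfd]. split.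
    + destruct Ta as [n Hn]. exists n. apply Nat.eqb_eq. rewrite den_NEQ0, den_ITER, !den_V, den_cst.
      cbn [nth]. apply Nat.eqb_eq. auto.
    + intros. auto with dfd.
  - rewrite den_depthE, den_V. cbn [nth]. unfold dfn, walkE. cbn [dfd].
    split; [exact I|]. split; [apply dfd_cst|]. intros i Hi.
    rewrite den_V, den_cst in *. cbn [nth] in *.
    assert (E : recv (fun i r => den stepE [i; r; depth f a0 a; a]) b0 i = recv (stp (depth f a0 a) a) b0 i)
      by (apply recv_ext; intros; apply den_stepE).
    rewrite E. clear E.
    set (d := depth f a0 a) in *.
    destruct Ta as [n Hn]. assert (Hd : d = n) by (apply depth_spec; auto).
    rewrite recv_W by lia.
    set (x := Nat.iter (d - i) f a).
    assert (Tx : tree f a0 x).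
    { exists i. unfold x. rewrite <- iter_add. replace (i + (d - i)) with d by lia. congruence. }
    assert (Dx : depth f a0 x = i).
    { apply depth_spec; auto. unfold x. rewrite <- iter_add. replace (i + (d - i)) with d by lia. congruence. }
    assert (Rx : RR f g x (W f b0 (chooseM f g) i x)).
    { pose proof (good_inv f g hf hg (chooseM f g) chooseM_good a0 b0 x Ha0 R0 Tx) as K.
      unfold hW in K. rewrite Dx in K. exact K. }
    unfold stepE. rewrite dfd_mkAp. cbn [dfds dens es length].
    split; [repeat (apply conj; [auto 10 with dfd|]); exact I|]. split; [reflexivity|].
    rewrite !den_ITER, !den_SUB, !den_V, den_cst. cbn [nth]. fold x.
    apply (dfn_chE f g hf hg). intros B2 I0. apply srch_ex; auto.
    apply (tree_noncyc f a0); auto.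
Qed.

Lemma part1_main : exists e h, (forall a, tree f a0 a -> eval e [a] (h a)) /\
  digraph_iso (tree f a0) (tree_edge f a0) (tree g b0) (tree_edge g b0) h.
Proof.
  destruct (core topE 1) as [p Hp]. exists p, (hW f a0 b0 (chooseM f g)). split.
  - intros a Ta. rewrite <- den_topE. apply Hp; auto. apply dfd_topE; auto.
  - apply good_iso; auto. apply chooseM_good.
Qed.

End Final.


Lemma iter_comm (f : nat -> nat) m n x : Nat.iter m f (Nat.iter n f x) = Nat.iter n f (Nat.iter m f x).
Proof. rewrite <- !iter_add. f_equal. lia. Qed.

Lemma cyc_len f c : cyclic f c -> exists K, cycle_length f c K.
Proof.
  intros [p [Hp E]].
  destruct (ex_least (fun n => (0 <? n) && (Nat.iter n f c =? c))) as [K [HK Hmin]].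
  - exists p. apply andb_true_iff. split; [apply Nat.ltb_lt; auto| apply Nat.eqb_eq; auto].
  - apply andb_true_iff in HK as [A B]. apply Nat.ltb_lt in A. apply Nat.eqb_eq in B.
    exists K. split; auto. split; auto. intros m [Hm1 Hm2] Em.
    specialize (Hmin m Hm2). rewrite (proj2 (Nat.ltb_lt 0 m) Hm1), (proj2 (Nat.eqb_eq _ _) Em) in Hmin.
    discriminate.
Qed.

Lemma cyc_pre_orbit f c x : cyclic f x -> f x = c -> exists j, x = Nat.iter j f c.
Proof.
  intros [p [Hp E]] Fx. exists (p - 1). rewrite <- Fx. rewrite <- iter_Sr.
  replace (S (p - 1)) with p by lia. auto.
Qed.

Lemma orbit_period f c K j : cycle_length f c K -> Nat.iter K f (Nat.iter j f c) = Nat.iter j f c.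
Proof. intros [_ [E _]]. rewrite iter_comm, E. auto. Qed.

Lemma extree_self f c : cyclic f c -> extree f c c.
Proof.
  intros Hc. destruct (cyc_len f c Hc) as [K HK]. exists K. split; auto. exists 0. split; auto.
  intros; lia.
Qed.

Lemma ext_fwd f c a : extree f c a -> a <> c ->
  exists c', f c' = c /\ ~ cyclic f c' /\ tree f c' a.
Proof.
  intros [K [HK [n [En Hm]]]] Hne.
  destruct n as [|n]; [simpl in En; congruence|].
  exists (Nat.iter n f a). split; [rewrite <- iter_S; auto|]. split.
  - intros Cy. destruct (cyc_pre_orbit f c _ Cy ltac:(rewrite <- iter_S; auto)) as [j Ej].
    apply (Hm n); [lia|]. rewrite Nat.add_comm, iter_add, Ej. apply orbit_period; auto.
  - exists n. auto.
Qed.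

Lemma ext_bwd f c c' a : cyclic f c -> f c' = c -> ~ cyclic f c' -> tree f c' a -> extree f c a.
Proof.
  intros Hc Fc Nc [k Hk]. destruct (cyc_len f c Hc) as [K HK]. exists K. split; auto.
  exists (S k). split; [rewrite iter_S, Hk; auto|].
  intros m Hm E. assert (Tm : tree f c' (Nat.iter m f a)).
  { exists (k - m). rewrite <- iter_add. replace (k - m + m) with k by lia. auto. }
  apply (tree_noncyc f c' _ Nc Tm). exists K. destruct HK as [K0 _]. split; auto.
  rewrite <- iter_add. rewrite Nat.add_comm. auto.
Qed.

Lemma pre_uniq f c c1 c2 : is_21_structure f -> cyclic f c -> f c1 = c -> f c2 = c ->
  ~ cyclic f c1 -> ~ cyclic f c2 -> c1 = c2.
Proof.
  intros Hf Hc F1 F2 N1 N2. destruct (cyc_len f c Hc) as [K HK].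
  set (q := Nat.iter (K - 1) f c).
  assert (Fq : f q = c).
  { unfold q. rewrite <- iter_S. replace (S (K - 1)) with K by (destruct HK; lia). apply HK. }
  assert (Cq : cyclic f q) by (apply cyc_iter; auto).
  destruct (Hf c) as [_ T]. destruct (T c1 c2 q F1 F2 Fq) as [E|[E|E]]; auto.
  - exfalso. apply N1. rewrite E. auto.
  - exfalso. apply N2. rewrite E. auto.
Qed.

Lemma ext_noncyc f c a : extree f c a -> a <> c -> ~ cyclic f a.
Proof.
  intros E N. destruct (ext_fwd f c a E N) as [c' [_ [Nc T]]]. apply (tree_noncyc f c'); auto.
Qed.

Lemma ext_f f c a : cyclic f c -> extree f c a -> a <> c -> extree f c (f a).
Proof.
  intros Hc E N. destruct (ext_fwd f c a E N) as [c' [Fc [Nc T]]].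
  destruct (Nat.eq_dec a c') as [->|Ne].
  - rewrite Fc. apply extree_self; auto.
  - apply ext_bwd with c'; auto. apply tree_f; auto.
Qed.

Lemma ext_in_tree f c c' a : is_21_structure f -> cyclic f c -> f c' = c -> ~ cyclic f c' ->
  extree f c a -> a <> c -> tree f c' a.
Proof.
  intros Hf Hc Fc Nc E N. destruct (ext_fwd f c a E N) as [c'' [F2 [N2 T]]].
  rewrite (pre_uniq f c c' c''); auto.
Qed.

Lemma tree_ne_root f c c' a : cyclic f c -> ~ cyclic f c' -> tree f c' a -> a <> c.
Proof. intros Hc Nc T E. subst a. apply (tree_noncyc f c' c Nc T). auto. Qed.

Section Part2.
Variables f g : nat -> nat.
Hypothesis hf : is_21_structure f.
Hypothesis hg : is_21_structure g.
Variables c d : nat.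
Hypothesis Hc : cyclic f c.
Hypothesis Hd : cyclic g d.
Variable H : nat -> nat.
Hypothesis HI : digraph_iso (extree f c) (extree_edge f c) (extree g d) (extree_edge g d) H.

Lemma ext_root : H c = d.
Proof.
  destruct HI as [Hm [Hi [Hs He]]].
  destruct (Nat.eq_dec (H c) d) as [|N]; auto. exfalso.
  assert (Ec : extree g d (H c)) by (apply Hm, extree_self; auto).
  assert (Eg : extree g d (g (H c))) by (apply ext_f; auto).
  destruct (Hs _ Eg) as [z [Ez Hz]].
  destruct (He c z (extree_self f c Hc) Ez) as [_ B].
  destruct (B ltac:(split; auto)) as [_ [Hcc _]]. auto.
Qed.

Lemma ext_H_ne a : extree f c a -> a <> c -> H a <> d.
Proof.
  intros E N K. destruct HI as [Hm [Hi [Hs He]]]. apply N. apply Hi; auto.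
  - apply extree_self; auto.
  - rewrite ext_root. auto.
Qed.

Section WithPre.
Variable c' : nat.
Hypothesis Fc' : f c' = c.
Hypothesis Nc' : ~ cyclic f c'.

Definition d' := H c'.

Lemma c'_ext : extree f c c'.
Proof. apply ext_bwd with c'; auto. apply tree_root. Qed.
Lemma c'_ne : c' <> c.
Proof. intro E. apply Nc'. rewrite E. auto. Qed.

Lemma d'_props : g d' = d /\ ~ cyclic g d' /\ d' <> d.
Proof.
  destruct HI as [Hm [Hi [Hs He]]].
  assert (Ed : extree g d d') by (apply Hm, c'_ext).
  destruct (He c' c c'_ext (extree_self f c Hc)) as [A _].
  destruct (A ltac:(split; [apply c'_ext|split; [apply c'_ne|auto]])) as [_ [N E]].
  rewrite ext_root in E. split; auto. split; auto.
  apply (ext_noncyc g d); auto.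
Qed.

Lemma restr_iso : digraph_iso (tree f c') (tree_edge f c') (tree g d') (tree_edge g d') H.
Proof.
  destruct d'_props as [Fd [Nd Ndd]].
  pose proof HI as HI'. destruct HI' as [Hm [Hi [Hs He]]].
  assert (TE : forall a, tree f c' a -> extree f c a /\ a <> c).
  { intros a T. split; [apply ext_bwd with c'; auto|]. apply (tree_ne_root f c c'); auto. }
  assert (TE' : forall b, tree g d' b -> extree g d b /\ b <> d).
  { intros b T. split; [apply ext_bwd with d'; auto|]. apply (tree_ne_root g d d'); auto. }
  assert (ET : forall a, tree f c' a -> tree g d' (H a)).
  { intros a T. destruct (TE a T) as [E N]. apply (ext_in_tree g d); auto.
    apply ext_H_ne; auto. }
  split; [|split; [|split]].
  - auto.
  - intros a b Ta Tb. apply Hi; apply TE; auto.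
  - intros b Tb. destruct (TE' b Tb) as [Eb Nb]. destruct (Hs b Eb) as [a [Ea Ha]].
    exists a. split; auto. apply (ext_in_tree f c); auto. intro K. rewrite K in Ha. apply Nb. rewrite <- Ha. apply ext_root.
  - intros a b Ta Tb. destruct (TE a Ta) as [Ea Na]. destruct (TE b Tb) as [Eb Nb].
    destruct (TE' _ (ET a Ta)) as [Ea' Na']. destruct (TE' _ (ET b Tb)) as [Eb' Nb'].
    destruct (He a b Ea Eb) as [A B]. unfold tree_edge, extree_edge in *. split.
    + intros [_ [_ E]]. destruct (A (conj Ea (conj Na E))) as [_ [_ E']]. auto.
    + intros [_ [_ E]]. destruct (B (conj Ea' (conj Na' E))) as [_ [_ E']]. auto.
Qed.

End WithPre.
End Part2.

Lemma part2_assemble f g c d (hf : is_21_structure f) (hg : is_21_structure g)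
  (Hc : cyclic f c) (Hd : cyclic g d) (Hx : exTree_iso f g c d)
  (P1 : forall a0 b0, ~ cyclic f a0 -> ~ cyclic g b0 -> Tree_iso f g a0 b0 ->
     exists (e : prf) (h : nat -> nat),
       (forall a, tree f a0 a -> eval e [a] (h a)) /\
       digraph_iso (tree f a0) (tree_edge f a0) (tree g b0) (tree_edge g b0) h) :
  exists (e : prf) (h : nat -> nat),
    (forall a, extree f c a -> eval e [a] (h a)) /\
    digraph_iso (extree f c) (extree_edge f c) (extree g d) (extree_edge g d) h.
Proof.
  destruct Hx as [H HI].
  destruct (classic (exists c', f c' = c /\ ~ cyclic f c')) as [[c' [Fc' Nc']]|Nex].
  - destruct (d'_props f g c d Hc Hd H HI c' Fc' Nc') as [Fd [Nd Ndd]].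
    set (dd := d' H c') in *.
    destruct (P1 c' dd Nc' Nd (ex_intro _ H (restr_iso f g hf hg c d Hc Hd H HI c' Fc' Nc')))
      as [ek [k [Hek Kiso]]].
    assert (Hk : cmpD (D1s (tree f c')) (un k)).
    { exists ek. intros ys [x [-> T]]. apply Hek; auto. }
    set (top := IfNZ (NEQ (V 0) (cst c)) (Ap (un k) (D1s (tree f c')) Hk (es [V 0])) (cst d)).
    destruct (core top 1) as [p Hp].
    set (h := fun a => if a =? c then d else k a).
    assert (Ktd : forall a, tree f c' a -> tree g dd (k a)) by (apply Kiso).
    assert (Kroot : k c' = dd) by (apply (easy_root f g c' dd Nc' k Kiso)).
    exists p, h. split.
    + intros a Ea. replace (h a) with (den top [a]).
      * apply Hp; auto. unfold top. cbn [dfd]. split; [apply dfd_NEQ; auto with dfd|].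
        split; [apply dfd_cst|]. intros Hne. rewrite den_NEQ in Hne. rewrite den_V, den_cst in Hne.
        cbn [nth] in Hne. destruct (Nat.eqb_spec a c) as [|Na]; [congruence|].
        cbn. split; [tauto|]. exists a. split; auto. apply (ext_in_tree f c); auto.
      * unfold top, h. rewrite den_IfNZ, den_NEQ0, den_V, den_cst. cbn [nth].
        destruct (a =? c); [apply den_cst|reflexivity].
    + assert (Hne_tree : forall a, tree f c' a -> a <> c) by (intros; apply (tree_ne_root f c c'); auto).
      assert (Hne_tree' : forall b, tree g dd b -> b <> d) by (intros; apply (tree_ne_root g d dd); auto).
      assert (ET : forall a, extree f c a -> a <> c -> tree f c' a) by (intros; apply (ext_in_tree f c); auto).
      assert (ET' : forall b, extree g d b -> b <> d -> tree g dd b) by (intros; apply (ext_in_tree g d); auto).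
      assert (hc : h c = d) by (unfold h; rewrite Nat.eqb_refl; auto).
      assert (hn : forall a, a <> c -> h a = k a) by (intros a N; unfold h; rewrite (proj2 (Nat.eqb_neq a c) N); auto).
      destruct Kiso as [Km [Ki [Ks Ke]]].
      split; [|split; [|split]].
      * intros a Ea. destruct (Nat.eq_dec a c) as [->|N].
        -- rewrite hc. apply extree_self; auto.
        -- rewrite hn; auto. apply ext_bwd with dd; auto.
      * intros a b Ea Eb E. destruct (Nat.eq_dec a c) as [->|Na]; destruct (Nat.eq_dec b c) as [->|Nb]; auto.
        -- rewrite hc, hn in E; auto. exfalso. apply (Hne_tree' (k b)); auto.
        -- rewrite hc, hn in E; auto. exfalso. apply (Hne_tree' (k a)); auto.
        -- rewrite !hn in E; auto.
      * intros b Eb. destruct (Nat.eq_dec b d) as [->|Nb].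
        -- exists c. split; auto. apply extree_self; auto.
        -- destruct (Ks b (ET' b Eb Nb)) as [a [Ta Ka]]. exists a. split.
           ++ apply ext_bwd with c'; auto.
           ++ rewrite hn; auto.
      * intros a b Ea Eb. unfold extree_edge.
        destruct (Nat.eq_dec a c) as [->|Na].
        -- rewrite hc. split; intros [_ [X _]]; congruence.
        -- rewrite (hn a Na). pose proof (ET a Ea Na) as Ta.
           destruct (Nat.eq_dec b c) as [->|Nb].
           ++ rewrite hc. split.
              ** intros [_ [_ E]]. split; [apply ext_bwd with dd; auto|]. split; [apply Hne_tree'; auto|].
                 assert (a = c') by (apply (pre_uniq f c); auto; apply (ext_noncyc f c); auto).
                 subst a. rewrite Kroot. auto.
              ** intros [_ [_ E]]. split; auto. split; auto.
                 assert (k a = dd).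
                 { apply (pre_uniq g d); auto. apply (ext_noncyc g d); auto.
                   apply ext_bwd with dd; auto. }
                 assert (a = c') by (apply Ki; auto; [apply tree_root| congruence]).
                 subst a. auto.
           ++ rewrite (hn b Nb). pose proof (ET b Eb Nb) as Tb.
              destruct (Ke a b Ta Tb) as [A B]. unfold tree_edge in A, B. split.
              ** intros [_ [_ E]]. destruct (A (conj Ta (conj Tb E))) as [_ [_ E']].
                 split; [apply ext_bwd with dd; auto|]. split; auto.
              ** intros [_ [_ E]]. destruct (B (conj (Km a Ta) (conj (Km b Tb) E))) as [_ [_ E']].
                 split; auto.
  - (* no non-cyclic preimage: both trees are singletons *)
    assert (Sc : forall a, extree f c a -> a = c).
    { intros a Ea. destruct (Nat.eq_dec a c); auto. exfalso. apply Nex.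
      destruct (ext_fwd f c a Ea n) as [c' [F [N _]]]. eauto. }
    destruct HI as [Hm [Hi [Hs He]]].
    assert (Hcd : H c = d) by (apply (ext_root f g c d Hc Hd H (conj Hm (conj Hi (conj Hs He))))).
    destruct (core (cst d) 1) as [p Hp].
    exists p, (fun _ => d). split.
    + intros a Ea. pose proof (Hp [a] eq_refl (dfd_cst d [a])) as K. rewrite den_cst in K. exact K.
    + split; [|split; [|split]].
      * intros. apply extree_self; auto.
      * intros a b Ea Eb _. rewrite (Sc a Ea), (Sc b Eb). auto.
      * intros b Eb. exists c. split; [apply extree_self; auto|].
        destruct (Hs b Eb) as [a [Ea Ha]]. rewrite (Sc a Ea), Hcd in Ha. auto.
      * intros a b Ea Eb. rewrite (Sc a Ea), (Sc b Eb). unfold extree_edge. split; intros [_ [X _]]; congruence.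
Qed.


Lemma cf_cmp h : computable_fun h -> cmpD (D1s TRUE) (un h).
Proof. intros [e He]. exists e. intros ys [x [-> _]]. apply He. Qed.
Lemma co_cmp P h : computable_on P h -> cmpD (D1s P) (un h).
Proof. intros [e He]. exists e. intros ys [x [-> Px]]. apply He; auto. Qed.

Theorem lemma2p9 (f g : nat -> nat)
  (hA : computable_21 f) (hB : computable_21 g)
  (hAB : struct_isomorphic f g)
  (hbA : computable_fun (beta f)) (hbB : computable_fun (beta g))
  (hiA : computable_on (split_hair f) (iso_fun f))
  (hiB : computable_on (split_hair g) (iso_fun g)) :
  (forall a0 b0 : nat, ~ cyclic f a0 -> ~ cyclic g b0 ->
     Tree_iso f g a0 b0 ->
     exists (e : prf) (h : nat -> nat),
       (forall a, tree f a0 a -> eval e [a] (h a)) /\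
       digraph_iso (tree f a0) (tree_edge f a0) (tree g b0) (tree_edge g b0) h)
  /\
  (forall c d : nat, cyclic f c -> cyclic g d ->
     exTree_iso f g c d ->
     exists (e : prf) (h : nat -> nat),
       (forall a, extree f c a -> eval e [a] (h a)) /\
       digraph_iso (extree f c) (extree_edge f c) (extree g d) (extree_edge g d) h).
Proof.
  destruct hA as [hf Hfc]. destruct hB as [hg Hgc].
  assert (P1 : forall a0 b0 : nat, ~ cyclic f a0 -> ~ cyclic g b0 ->
     Tree_iso f g a0 b0 ->
     exists (e : prf) (h : nat -> nat),
       (forall a, tree f a0 a -> eval e [a] (h a)) /\
       digraph_iso (tree f a0) (tree_edge f a0) (tree g b0) (tree_edge g b0) h).
  { intros a0 b0 Na Nb T.
    apply (part1_main f g hf hg (cf_cmp _ Hfc) (cf_cmp _ Hgc) (cf_cmp _ hbA) (cf_cmp _ hbB)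
             (co_cmp _ _ hiA) a0 b0 Na Nb).
    apply Tree_iso_RR; auto. }
  split; auto.
  intros c d Hc Hd Hx. apply part2_assemble; auto.
Qed.
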